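(* Let $T$ be an orthogonal term rewriting system and $t,s,u$ terms such that there is a convergent reduction sequence from $t$ with target $u$, $u$ is a normal form, and there is a finite reduction sequence from $t$ to $s$ all of whose steps have depth $0$. Then there is a convergent reduction sequence from $s$ with target $u$.
   Context: $T=(\Sigma,R)$, $\Sigma$ finite, rules $l\to r$ with $l$ finite non-variable, variables of $r$ in $l$, terms finite or infinite. $T$ is orthogonal iff it is left-linear (no variable occurs twice in a left-hand side) and non-overlapping: there is no term $t=\sigma_1 l_1$ with $t|_p=\sigma_2 l_2$ for left-hand sides $l_1,l_2$ of rules and $p$ a non-variable position of $l_1$, other than the trivial case $p$ empty and $l_1,l_2$ being the same rule. A normal form is a term containing no subterm of the form $\sigma l$ for a rule $l\to r$. Distance $d(t,u)=0$ if $t=u$, else $2^{-k}$ with $k$ the least depth at which they differ. A reduction step $\langle t,p,\mu,\sigma\rangle$ has $t|_p=\sigma l$, target $t[\sigma r]_p$, depth $|p|$. A reduction sequence is $id_t$ or $\langle a_\alpha\rangle_{\alpha<\beta}$ with $src(a_{\alpha+1})=tgt(a_\alpha)$, and at each limit $\beta_0<\beta$: $\lim_{\alpha\to\beta_0}tgt(a_\alpha)$ exists and equals $src(a_{\beta_0})$, and depths of $a_\alpha$ tend to infinity as $\alpha\to\beta_0$. It is convergent iff it is empty, of successor length, or of limit length $\beta$ with the limit existing and depths tending to infinity also at $\beta$; its target is then the target of its last step, or that limit. *)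

(* Defs.v *)
From Stdlib Require Import List Arith.
Import ListNotations.
Set Implicit Arguments.

Record signature := {
  sym : Type;
  arity : sym -> nat;
  sym_finite : exists l : list sym, forall f, In f l }.

Definition var := nat.
Definition label (S : signature) := (sym S + var)%type.
Definition pos := list nat.

(* A (finite or infinite) term is a labelling of positions; [None] means
   "not a position of the term".  [wf] says it is a genuine tree. *)
Definition term (S : signature) := pos -> option (label S).

Definition wf (S : signature) (t : term S) : Prop :=
  t [] <> None /\
  forall (p : pos) (i : nat),
    t (p ++ [i]) <> None <-> exists f, t p = Some (inl f) /\ i < arity S f.

Definition finite_term (S : signature) (t : term S) : Prop :=
  exists n, forall p : pos, n < length p -> t p = None.

Definition subterm (S : signature) (t : term S) (p : pos) : term S :=
  fun q => t (p ++ q).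

Fixpoint strip (p q : pos) : option pos :=
  match p, q with
  | [], _ => Some q
  | i :: p', j :: q' => if Nat.eqb i j then strip p' q' else None
  | _ :: _, [] => None
  end.

Definition replace (S : signature) (t : term S) (p : pos) (s : term S) : term S :=
  fun q => match strip p q with Some r => s r | None => t q end.

Fixpoint subst_aux (S : signature) (l : term S) (sigma : var -> term S)
  (acc : pos) (p : pos) : option (label S) :=
  match l acc with
  | Some (inr x) => sigma x p
  | _ => match p with
         | [] => l acc
         | i :: p' => subst_aux l sigma (acc ++ [i]) p'
         end
  end.

Definition subst (S : signature) (l : term S) (sigma : var -> term S) : term S :=
  fun p => subst_aux l sigma [] p.

Definition wf_subst (S : signature) (sigma : var -> term S) : Prop :=
  forall x, wf (sigma x).

Record rule (S : signature) := { lhs : term S; rhs : term S }.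

Definition is_rule (S : signature) (rho : rule S) : Prop :=
  wf (lhs rho) /\ wf (rhs rho) /\
  finite_term (lhs rho) /\
  (exists f, lhs rho [] = Some (inl f)) /\
  (forall p x, rhs rho p = Some (inr x) -> exists q, lhs rho q = Some (inr x)).

Record TRS (S : signature) := {
  rules : rule S -> Prop;
  rules_ok : forall rho, rules rho -> is_rule rho }.

Definition left_linear (S : signature) (T : TRS S) : Prop :=
  forall rho, rules T rho ->
  forall p q x, lhs rho p = Some (inr x) -> lhs rho q = Some (inr x) -> p = q.

Definition non_overlapping (S : signature) (T : TRS S) : Prop :=
  ~ exists (rho1 rho2 : rule S) (sigma1 sigma2 : var -> term S) (p : pos),
      rules T rho1 /\ rules T rho2 /\ wf_subst sigma1 /\ wf_subst sigma2 /\
      (exists f, lhs rho1 p = Some (inl f)) /\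
      subterm (subst (lhs rho1) sigma1) p = subst (lhs rho2) sigma2 /\
      ~ (p = [] /\ rho1 = rho2).

Definition orthogonal (S : signature) (T : TRS S) : Prop :=
  left_linear T /\ non_overlapping T.

Definition normal_form (S : signature) (T : TRS S) (t : term S) : Prop :=
  ~ exists (p : pos) (rho : rule S) (sigma : var -> term S),
      rules T rho /\ wf_subst sigma /\ subterm t p = subst (lhs rho) sigma.

Record step (S : signature) := {
  st_src : term S; st_pos : pos; st_rule : rule S; st_sub : var -> term S }.

Definition valid_step (S : signature) (T : TRS S) (a : step S) : Prop :=
  wf (st_src a) /\ rules T (st_rule a) /\ wf_subst (st_sub a) /\
  subterm (st_src a) (st_pos a) = subst (lhs (st_rule a)) (st_sub a).

Definition st_tgt (S : signature) (a : step S) : term S :=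
  replace (st_src a) (st_pos a) (subst (rhs (st_rule a)) (st_sub a)).

Definition st_depth (S : signature) (a : step S) : nat := length (st_pos a).

(* t and u agree up to depth k, i.e. d(t,u) < 2^-k *)
Definition agree (S : signature) (k : nat) (t u : term S) : Prop :=
  forall p : pos, length p <= k -> t p = u p.

(* Ordinals are represented by well-ordered index types. *)
Record well_order (A : Type) (lt : A -> A -> Prop) : Prop := {
  wo_trans : forall a b c, lt a b -> lt b c -> lt a c;
  wo_irrefl : forall a, ~ lt a a;
  wo_total : forall a b, lt a b \/ a = b \/ lt b a;
  wo_wf : well_founded lt }.

Definition is_min (A : Type) (lt : A -> A -> Prop) (a : A) : Prop :=
  forall b, ~ lt b a.
Definition is_succ (A : Type) (lt : A -> A -> Prop) (a b : A) : Prop :=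
  lt a b /\ forall c, ~ (lt a c /\ lt c b).
Definition is_limit (A : Type) (lt : A -> A -> Prop) (b : A) : Prop :=
  (exists a, lt a b) /\ ~ (exists a, is_succ lt a b).

(* limit along the indices in D (a down-closed set with no maximum):
   f alpha --> v as alpha runs through D *)
Definition conv_on (S : signature) (A : Type) (lt : A -> A -> Prop)
  (D : A -> Prop) (f : A -> term S) (v : term S) : Prop :=
  forall k, exists a, D a /\ forall c, D c -> (a = c \/ lt a c) -> agree k (f c) v.

Definition depth_inf_on (A : Type) (lt : A -> A -> Prop)
  (D : A -> Prop) (d : A -> nat) : Prop :=
  forall n, exists a, D a /\ forall c, D c -> (a = c \/ lt a c) -> n < d c.

(* A reduction sequence: a source term and steps indexed by a well order
   (the empty index type gives id_t). *)
Record rseq (S : signature) := {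
  rs_src : term S;
  rs_idx : Type;
  rs_lt : rs_idx -> rs_idx -> Prop;
  rs_step : rs_idx -> step S }.

Definition is_rseq (S : signature) (T : TRS S) (q : rseq S) : Prop :=
  wf (rs_src q) /\
  well_order (rs_lt q) /\
  (forall a, valid_step T (rs_step q a)) /\
  (forall a, is_min (rs_lt q) a -> st_src (rs_step q a) = rs_src q) /\
  (forall a b, is_succ (rs_lt q) a b -> st_src (rs_step q b) = st_tgt (rs_step q a)) /\
  (forall b, is_limit (rs_lt q) b ->
     conv_on (rs_lt q) (fun c => rs_lt q c b) (fun c => st_tgt (rs_step q c))
             (st_src (rs_step q b)) /\
     depth_inf_on (rs_lt q) (fun c => rs_lt q c b) (fun c => st_depth (rs_step q c))).

Definition conv_target (S : signature) (q : rseq S) (u : term S) : Prop :=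
  (~ inhabited (rs_idx q) /\ u = rs_src q) \/
  (exists m, (forall a, a = m \/ rs_lt q a m) /\ u = st_tgt (rs_step q m)) \/
  (inhabited (rs_idx q) /\ (forall m, exists a, rs_lt q m a) /\
   wf u /\
   conv_on (rs_lt q) (fun _ => True) (fun c => st_tgt (rs_step q c)) u /\
   depth_inf_on (rs_lt q) (fun _ => True) (fun c => st_depth (rs_step q c))).

Definition finite_rseq (S : signature) (q : rseq S) : Prop :=
  exists l : list (rs_idx q), forall a, In a l.

(* Main.v *)
Require Import Defs.
From Stdlib Require Import List Arith Lia Classical ClassicalEpsilon FunctionalExtensionality Wellfounded Cantor.
Import ListNotations.

Lemma strip_app (p r : pos) : strip p (p ++ r) = Some r.
Proof. induction p; simpl; auto. rewrite Nat.eqb_refl. auto. Qed.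

Lemma strip_some (p q r : pos) : strip p q = Some r -> q = p ++ r.
Proof.
  revert q. induction p; intros q H; simpl in *.
  - congruence.
  - destruct q; try discriminate. destruct (Nat.eqb a n) eqn:E; try discriminate.
    apply Nat.eqb_eq in E. subst. f_equal. auto.
Qed.

Lemma strip_none (p q : pos) : strip p q = None -> forall r, q <> p ++ r.
Proof. intros H r E. subst. rewrite strip_app in H. discriminate. Qed.

Lemma strip_cases (p q : pos) : (exists r, q = p ++ r /\ strip p q = Some r) \/
   (strip p q = None /\ forall r, q <> p ++ r).
Proof.
  destruct (strip p q) eqn:E.
  - left. exists p0. split; auto. apply strip_some; auto.
  - right. split; auto. apply strip_none; auto.
Qed.

Lemma prefix_comparable (a b c d : pos) : a ++ c = b ++ d ->
  (exists e, b = a ++ e) \/ (exists e, a = b ++ e).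
Proof.
  revert b. induction a; intros b H; simpl in *.
  - left. exists b. auto.
  - destruct b; simpl in *.
    + right. exists (a :: a0). auto.
    + injection H; intros H1 H2; subst. destruct (IHa _ H1) as [[e He]|[e He]].
      * left. exists e. subst. auto.
      * right. exists e. subst. auto.
Qed.

Lemma subterm_nil {S} (t : term S) : subterm t [] = t.
Proof. reflexivity. Qed.

Lemma subterm_app {S} (t : term S) p q : subterm (subterm t p) q = subterm t (p ++ q).
Proof. unfold subterm. apply functional_extensionality. intro x. rewrite app_assoc. auto. Qed.

Lemma replace_nil {S} (t s : term S) : replace t [] s = s.
Proof. reflexivity. Qed.

Lemma replace_at {S} (t s : term S) p r : replace t p s (p ++ r) = s r.
Proof. unfold replace. rewrite strip_app. auto. Qed.

Lemma replace_off {S} (t s : term S) p q : (forall r, q <> p ++ r) -> replace t p s q = t q.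
Proof.
  intro H. unfold replace. destruct (strip p q) eqn:E; auto.
  apply strip_some in E. exfalso. eapply H; eauto.
Qed.

Lemma subterm_replace_in {S} (t X : term S) p w :
  subterm (replace t (p ++ w) X) p = replace (subterm t p) w X.
Proof.
  apply functional_extensionality. intro q. unfold subterm.
  destruct (strip_cases w q) as [[r [E _]]|[_ H]].
  - subst. rewrite app_assoc. rewrite !replace_at. auto.
  - rewrite !replace_off; auto. intros r E. apply (H r).
    rewrite <- app_assoc in E. apply app_inv_head in E. auto.
Qed.

Lemma subterm_replace_out {S} (t X : term S) p w :
  (forall e, p <> w ++ e) -> (forall e, w <> p ++ e) ->
  subterm (replace t p X) w = subterm t w.
Proof.
  intros H1 H2. apply functional_extensionality. intro q. unfold subterm.
  rewrite replace_off; auto. intros r E.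
  destruct (prefix_comparable _ _ _ _ E) as [[e He]|[e He]].
  - exact (H1 e He).
  - exact (H2 e He).
Qed.

Lemma wf_none_app {S} (t : term S) p q : wf t -> t p = None -> t (p ++ q) = None.
Proof.
  intros [_ Hw] H. induction q using rev_ind.
  - rewrite app_nil_r. auto.
  - rewrite app_assoc. destruct (t ((p ++ q) ++ [x])) eqn:E; auto.
    assert (t ((p ++ q) ++ [x]) <> None) by congruence.
    apply Hw in H0. destruct H0 as [f [Hf _]]. congruence.
Qed.

Lemma wf_prefix_inl {S} (t : term S) p q : wf t -> t (p ++ q) <> None -> q <> [] ->
  exists f, t p = Some (inl f).
Proof.
  intros Hw. induction q using rev_ind; intros H Hq.
  - congruence.
  - rewrite app_assoc in H. apply (proj2 Hw) in H. destruct H as [f [Hf _]].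
    destruct q.
    + rewrite app_nil_r in Hf. eauto.
    + apply IHq; [congruence|]. intro E; inversion E.
Qed.

Lemma wf_prefix_ne {S} (t : term S) p q : wf t -> t (p ++ q) <> None -> t p <> None.
Proof.
  intros Hw H. destruct q. rewrite app_nil_r in H; auto.
  destruct (wf_prefix_inl t p (n :: q) Hw H) as [f Hf]; [discriminate|congruence].
Qed.

Lemma wf_subterm {S} (t : term S) p : wf t -> t p <> None -> wf (subterm t p).
Proof.
  intros Hw H. split.
  - unfold subterm. rewrite app_nil_r. auto.
  - intros q i. unfold subterm. rewrite app_assoc. apply (proj2 Hw).
Qed.

Lemma wf_var_leaf {S} (t : term S) p q x : wf t -> t p = Some (inr x) -> q <> [] -> t (p ++ q) = None.
Proof.
  intros Hw H Hq. destruct (t (p ++ q)) eqn:E; auto.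
  destruct (wf_prefix_inl t p q Hw) as [f Hf]; try congruence.
Qed.

Definition agree_trans {S} k (a b c : term S) : agree k a b -> agree k b c -> agree k a c.
Proof. unfold agree. intros. rewrite H; auto. Qed.
Definition agree_sym {S} k (a b : term S) : agree k a b -> agree k b a.
Proof. unfold agree. intros. rewrite H; auto. Qed.
Lemma agree_mono {S} k k' (a b : term S) : k' <= k -> agree k a b -> agree k' a b.
Proof. unfold agree. intros. apply H0. lia. Qed.
Lemma agree_subterm {S} k (a b : term S) p : agree (length p + k) a b -> agree k (subterm a p) (subterm b p).
Proof. unfold agree, subterm. intros. apply H. rewrite length_app. lia. Qed.
Lemma agree_all {S} (a b : term S) : (forall k, agree k a b) -> a = b.
Proof. intros. apply functional_extensionality. intro p. apply (H (length p)). lia. Qed.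


Fixpoint gsub_aux {S} (l : term S) (F : pos -> var -> term S) (acc p : pos) : option (label S) :=
  match l acc with
  | Some (inr x) => F acc x p
  | _ => match p with [] => l acc | i :: p' => gsub_aux l F (acc ++ [i]) p' end
  end.
Definition gsub {S} (l : term S) F : term S := fun p => gsub_aux l F [] p.

Lemma subst_gsub_aux {S} (l : term S) sigma acc p :
  subst_aux l sigma acc p = gsub_aux l (fun _ x => sigma x) acc p.
Proof.
  revert acc. induction p; intro acc; simpl; destruct (l acc) as [[f|x]|]; auto.
Qed.
Lemma subst_gsub {S} (l : term S) sigma : subst l sigma = gsub l (fun _ x => sigma x).
Proof. apply functional_extensionality. intro p. apply subst_gsub_aux. Qed.

Lemma gsub_aux_var {S} (l : term S) F acc o w x :
  l (acc ++ o) = Some (inr x) ->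
  (forall o1 o2, o = o1 ++ o2 -> o2 <> [] -> forall y, l (acc ++ o1) <> Some (inr y)) ->
  gsub_aux l F acc (o ++ w) = F (acc ++ o) x w.
Proof.
  revert acc. induction o; intros acc H1 H2; simpl.
  - rewrite app_nil_r in *. destruct w; simpl; rewrite H1; auto.
  - destruct (l acc) as [[f|y]|] eqn:E.
    + rewrite (IHo (acc ++ [a])). rewrite <- app_assoc. auto.
      rewrite <- app_assoc. auto.
      intros o1 o2 Ho Hne y. rewrite <- app_assoc. apply (H2 (a :: o1) o2); subst; auto.
    + exfalso. apply (H2 [] (a :: o)) with y; auto. discriminate. rewrite app_nil_r. auto.
    + rewrite (IHo (acc ++ [a])). rewrite <- app_assoc. auto.
      rewrite <- app_assoc. auto.
      intros o1 o2 Ho Hne y. rewrite <- app_assoc. apply (H2 (a :: o1) o2); subst; auto.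
Qed.

Lemma gsub_var {S} (l : term S) F o w x : wf l -> l o = Some (inr x) ->
  gsub l F (o ++ w) = F o x w.
Proof.
  intros Hw H. unfold gsub. apply (gsub_aux_var l F [] o w x); auto.
  intros o1 o2 Ho Hne y Hy. simpl in Hy. subst.
  destruct (wf_prefix_inl l o1 o2 Hw) as [f Hf]; auto; congruence.
Qed.

Lemma gsub_aux_novar {S} (l : term S) F acc p :
  (forall o1 o2, p = o1 ++ o2 -> forall y, l (acc ++ o1) <> Some (inr y)) ->
  gsub_aux l F acc p = l (acc ++ p).
Proof.
  revert acc. induction p; intros acc H; simpl.
  - rewrite app_nil_r. destruct (l acc) as [[f|y]|] eqn:E; auto.
    exfalso. apply (H [] []) with y; auto. rewrite app_nil_r; auto.
  - destruct (l acc) as [[f|y]|] eqn:E.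
    + rewrite IHp. rewrite <- app_assoc. auto.
      intros o1 o2 Ho y. rewrite <- app_assoc. apply (H (a :: o1) o2). subst; auto.
    + exfalso. apply (H [] (a :: p)) with y; auto. rewrite app_nil_r; auto.
    + rewrite IHp. rewrite <- app_assoc. auto.
      intros o1 o2 Ho y. rewrite <- app_assoc. apply (H (a :: o1) o2). subst; auto.
Qed.

Definition novar {S} (l : term S) p := forall o1 o2, p = o1 ++ o2 -> forall y, l o1 <> Some (inr y).

Lemma gsub_novar {S} (l : term S) F p : novar l p -> gsub l F p = l p.
Proof. intro H. unfold gsub. apply gsub_aux_novar. simpl. auto. Qed.

Lemma decomp {S} (l : term S) p :
  (exists o w x, p = o ++ w /\ l o = Some (inr x)) \/ novar l p.
Proof.
  destruct (classic (exists o w x, p = o ++ w /\ l o = Some (inr x))); auto.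
  right. intros o1 o2 E y Hy. apply H. eauto.
Qed.

Lemma gsub_ext {S} (l : term S) F F' : wf l ->
  (forall o x, l o = Some (inr x) -> F o x = F' o x) -> gsub l F = gsub l F'.
Proof.
  intros Hw H. apply functional_extensionality. intro p.
  destruct (decomp l p) as [[o [w [x [E Hx]]]]|Hn].
  - subst. rewrite !(gsub_var l _ o w x Hw Hx). rewrite H; auto.
  - rewrite !gsub_novar; auto.
Qed.

Lemma gsub_agree {S} (l : term S) F F' k : wf l ->
  (forall o x, l o = Some (inr x) -> length o <= k -> agree (k - length o) (F o x) (F' o x)) ->
  agree k (gsub l F) (gsub l F').
Proof.
  intros Hw H p Hp.
  destruct (decomp l p) as [[o [w [x [E Hx]]]]|Hn].
  - subst. rewrite !(gsub_var l _ o w x Hw Hx). rewrite length_app in Hp.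
    apply H; auto; lia.
  - rewrite !gsub_novar; auto.
Qed.

Lemma novar_prefix {S} (l : term S) p q : novar l (p ++ q) -> novar l p.
Proof. intros H o1 o2 E. subst. apply (H o1 (o2 ++ q)). rewrite app_assoc. auto. Qed.

Lemma gsub_wf {S} (l : term S) F : wf l ->
  (forall o x, l o = Some (inr x) -> wf (F o x)) -> wf (gsub l F).
Proof.
  intros Hw HF. split.
  - destruct (l []) as [[f|x]|] eqn:E.
    + rewrite gsub_novar. congruence. intros o1 o2 Ho y. destruct o1; simpl in Ho; try discriminate. congruence.
    + pose proof (gsub_var l F [] [] x Hw E). simpl in H. rewrite H. apply HF; auto.
    + destruct Hw; congruence.
  - intros p i.
    destruct (decomp l p) as [[o [w [x [E Hx]]]]|Hn].
    + subst. rewrite <- app_assoc. rewrite !(gsub_var l _ o _ x Hw Hx). apply (HF o x Hx).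
    + rewrite (gsub_novar l F p Hn).
      destruct (decomp l (p ++ [i])) as [[o [w [x [E Hx]]]]|Hn'].
      *
        destruct (prefix_comparable _ _ _ _ E) as [[e He]|[e He]].
        -- destruct e as [|j e].
           ++ rewrite app_nil_r in He. subst o. exfalso. apply (Hn p [] (eq_sym (app_nil_r _)) x Hx).
           ++ assert (Ho: o = p ++ [i]).
              { subst o. assert (length (p ++ [i]) = length ((p ++ j :: e) ++ w)) by (rewrite E; auto).
                rewrite !length_app in H. simpl in H.
                destruct e. 2:{ simpl in H. lia. } destruct w. 2:{ simpl in H. lia. }
                rewrite app_nil_r in E. apply app_inv_head in E. congruence. }
              clear He; subst o. rewrite <- (app_nil_r (p ++ [i])). rewrite (gsub_var l F _ [] x Hw Hx).
              split.
              ** intros _. apply (proj2 Hw). rewrite ?app_nil_r in *. congruence.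
              ** intros _. destruct (HF _ x Hx) as [HH _]. exact HH.
        -- subst p. exfalso. apply (Hn o e eq_refl x Hx).
      * rewrite gsub_novar; auto. apply (proj2 Hw).
Qed.


Definition red {S} (T : TRS S) (a b : term S) :=
  exists q, is_rseq T q /\ rs_src q = a /\ conv_target q b.

Definition ev {A : Type} (lt : A -> A -> Prop) (D : A -> Prop) (P : nat -> A -> Prop) :=
  forall k, exists a, D a /\ forall c, D c -> (a = c \/ lt a c) -> P k c.

Lemma ev_emb {A B : Type} (ltA : A -> A -> Prop) (ltB : B -> B -> Prop) (h : A -> B)
  DA DB (PA : nat -> A -> Prop) (PB : nat -> B -> Prop) :
  (forall a, DA a -> DB (h a)) ->
  (forall a b, DA a -> DB b -> (h a = b \/ ltB (h a) b) -> exists a', b = h a' /\ DA a') ->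
  (forall a a', ltB (h a) (h a') -> ltA a a') ->
  (forall k a, PA k a -> PB k (h a)) -> ev ltA DA PA -> ev ltB DB PB.
Proof.
  intros H1 H2 H3 H4 H k. destruct (H k) as [a [Ha Hc]]. exists (h a). split; auto.
  intros c Dc Hac. destruct (H2 a c Ha Dc Hac) as [a' [E Da']]. subst c.
  destruct Hac as [E|L].
  - rewrite <- E. apply H4. apply Hc; auto.
  - apply H4. apply Hc; auto.
Qed.

Lemma ev_cofinal {A : Type} (lt : A -> A -> Prop) D D' P :
  (forall a b c, lt a b -> lt b c -> lt a c) ->
  ev lt D P -> (forall x, D' x -> D x) ->
  (forall a, D a -> exists a', D' a' /\ (a = a' \/ lt a a')) -> ev lt D' P.
Proof.
  intros Htr H H1 H2 k. destruct (H k) as [a [Da Hc]]. destruct (H2 a Da) as [a' [Da' Ha']].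
  exists a'. split; auto. intros c Dc Hc'. apply Hc; auto.
  destruct Ha' as [E|L]; subst; auto. destruct Hc' as [E|L']; subst; eauto.
Qed.

Lemma conv_ev {S A} lt D (f : A -> term S) v : conv_on lt D f v <-> ev lt D (fun k c => agree k (f c) v).
Proof. unfold conv_on, ev. tauto. Qed.
Lemma depth_ev {A} lt D (d : A -> nat) : depth_inf_on lt D d <-> ev lt D (fun n c => n < d c).
Proof. unfold depth_inf_on, ev. tauto. Qed.

Definition le {A} (lt : A -> A -> Prop) a b := a = b \/ lt a b.

Lemma wo_min {A} (lt : A -> A -> Prop) (P : A -> Prop) : well_order lt -> (exists x, P x) ->
  exists m, P m /\ forall y, lt y m -> ~ P y.
Proof.
  intros Hw [x Hx]. revert Hx. induction x using (well_founded_induction (wo_wf Hw)).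
  intro Hx. destruct (classic (exists y, lt y x /\ P y)) as [[y [Hy Py]]|N].
  - apply (H y Hy Py).
  - exists x. split; auto. intros y Hy Py. apply N; eauto.
Qed.

Lemma wo_cases {A} (lt : A -> A -> Prop) c : is_min lt c \/ (exists a, is_succ lt a c) \/ is_limit lt c.
Proof.
  destruct (classic (exists a, lt a c)) as [H|H].
  - destruct (classic (exists a, is_succ lt a c)); auto. right. right. split; auto.
  - left. intros b Hb. apply H; eauto.
Qed.

Lemma succ_exists {A} (lt : A -> A -> Prop) a b : well_order lt -> lt a b ->
  exists c, is_succ lt a c /\ le lt c b.
Proof.
  intros Hw H. destruct (wo_min lt (fun c => lt a c) Hw) as [c [Hc Hm]]; eauto.
  exists c. split.
  - split; auto. intros d [H1 H2]. apply (Hm d); auto.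
  - destruct (wo_total Hw c b) as [L|[E|L]]; unfold le; auto.
    exfalso. apply (Hm b); auto.
Qed.

Lemma succ_unique_pred {A} (lt : A -> A -> Prop) a b c : well_order lt -> is_succ lt a c -> lt b c -> le lt b a.
Proof.
  intros Hw [H1 H2] H. destruct (wo_total Hw b a) as [L|[E|L]]; unfold le; auto.
  exfalso. apply (H2 b); auto.
Qed.

Lemma le_trans {A} (lt : A -> A -> Prop) a b c : well_order lt -> le lt a b -> le lt b c -> le lt a c.
Proof. unfold le. intros Hw [E|L] [E'|L']; subst; auto. right. eapply wo_trans; eauto. Qed.

Lemma le_lt_trans {A} (lt : A -> A -> Prop) a b c : well_order lt -> le lt a b -> lt b c -> lt a c.
Proof. unfold le. intros Hw [E|L] L'; subst; auto. eapply wo_trans; eauto. Qed.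
Lemma lt_le_trans {A} (lt : A -> A -> Prop) a b c : well_order lt -> lt a b -> le lt b c -> lt a c.
Proof. unfold le. intros Hw L [E|L']; subst; auto. eapply wo_trans; eauto. Qed.

Lemma lt_not_le {A} (lt : A -> A -> Prop) a b : well_order lt -> lt a b -> ~ le lt b a.
Proof.
  intros Hw H [E|L]. subst. eapply wo_irrefl; eauto. apply (wo_irrefl Hw a). eapply wo_trans; eauto.
Qed.

Lemma not_lt_le {A} (lt : A -> A -> Prop) a b : well_order lt -> ~ lt a b -> le lt b a.
Proof. intros Hw H. destruct (wo_total Hw a b) as [L|[E|L]]; unfold le; auto. contradiction. Qed.


Definition sumlt {A B : Type} (l1 : A -> A -> Prop) (l2 : B -> B -> Prop) (x y : A + B) : Prop :=
  match x, y with
  | inl a, inl b => l1 a b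
  | inr a, inr b => l2 a b
  | inl _, inr _ => True
  | inr _, inl _ => False
  end.

Lemma sum_wo {A B} (l1 : A -> A -> Prop) (l2 : B -> B -> Prop) :
  well_order l1 -> well_order l2 -> well_order (sumlt l1 l2).
Proof.
  intros W1 W2. constructor.
  - intros [a|a] [b|b] [c|c]; simpl; try tauto; eapply wo_trans; eauto.
  - intros [a|a]; simpl; eapply wo_irrefl; eauto.
  - intros [a|a] [b|b]; simpl; auto.
    + destruct (wo_total W1 a b) as [H|[H|H]]; subst; auto.
    + destruct (wo_total W2 a b) as [H|[H|H]]; subst; auto.
  - assert (HL : forall a, Acc (sumlt l1 l2) (inl a)).
    { intro a. induction a using (well_founded_induction (wo_wf W1)).
      constructor. intros [y|y] Hy; simpl in Hy; try contradiction. auto. }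
    intros [a|b]; auto.
    induction b using (well_founded_induction (wo_wf W2)).
    constructor. intros [y|y] Hy; simpl in Hy; auto.
Qed.

Definition concat {S} (q1 q2 : rseq S) : rseq S :=
  {| rs_src := rs_src q1; rs_idx := (rs_idx q1 + rs_idx q2)%type;
     rs_lt := sumlt (rs_lt q1) (rs_lt q2);
     rs_step := fun j => match j with inl x => rs_step q1 x | inr y => rs_step q2 y end |}.

Lemma red_trans {S} (T : TRS S) aa bb dd : red T aa bb -> red T bb dd -> red T aa dd.
Proof.
  intros [q1 [R1 [E1 C1]]] [q2 [R2 [E2 C2]]].
  destruct R1 as [Wf1 [W1 [V1 [M1 [Su1 L1]]]]].
  destruct R2 as [Wf2 [W2 [V2 [M2 [Su2 L2]]]]].
  pose proof (sum_wo _ _ W1 W2) as W.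
  exists (concat q1 q2). split; [|split].
  - split; [|split; [|split; [|split; [|split]]]]; simpl; auto.
    + intros [x|y]; auto.
    + intros [x|y] Hm.
      * apply M1. intros z Hz. apply (Hm (inl z)). auto.
      * assert (NI : ~ inhabited (rs_idx q1)).
        { intros [z]. apply (Hm (inl z)). simpl. auto. }
        rewrite M2. 2:{ intros z Hz. apply (Hm (inr z)). auto. }
        destruct C1 as [[_ E]|[[m _]|[[Hi] _]]]; try (exfalso; apply NI; constructor; auto; fail).
        rewrite E2. auto.
    + intros [x|x] [y|y] [H1 H2]; simpl in *; try contradiction.
      * apply Su1. split; auto. intros c [Hc1 Hc2]. apply (H2 (inl c)). auto.
      * (* x max of q1, y min of q2 *)
        rewrite M2. 2:{ intros z Hz. apply (H2 (inr z)). simpl. auto. }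
        assert (Hmax : forall a, a = x \/ rs_lt q1 a x).
        { intro a. destruct (wo_total W1 a x) as [H|[H|H]]; auto.
          exfalso. apply (H2 (inl a)). simpl. auto. }
        destruct C1 as [[NI _]|[[m [Hm Em]]|[_ [Hnm _]]]].
        -- exfalso. apply NI. constructor. exact x.
        -- rewrite E2, Em. assert (m = x) as ->. { destruct (Hmax m) as [E|L]; auto. exfalso. destruct (Hm x) as [E'|L']. { rewrite E' in L. exact (wo_irrefl W1 _ L). } exact (wo_irrefl W1 _ (wo_trans W1 _ _ _ L L')). }
           reflexivity.
        -- exfalso. destruct (Hnm x) as [z Hz]. destruct (Hmax z) as [E|L]. { rewrite E in Hz. exact (wo_irrefl W1 _ Hz). }
           exact (wo_irrefl W1 _ (wo_trans W1 _ _ _ Hz L)).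
      * apply Su2. split; auto. intros c [Hc1 Hc2]. apply (H2 (inr c)). auto.
    + intros [y|y] [[z Hz] Hnp].
      * assert (Ly : is_limit (rs_lt q1) y).
        { split.
          - destruct z as [z|z]; simpl in Hz; try contradiction. eauto.
          - intros [a [Ha1 Ha2]]. apply Hnp. exists (inl a). split; auto.
            intros [c|c] [Hc1 Hc2]; simpl in *; auto. apply (Ha2 c); auto. }
        destruct (L1 y Ly) as [Cv Dp]. rewrite conv_ev in *. rewrite depth_ev in *. split.
        -- eapply (ev_emb (rs_lt q1) _ inl); try exact Cv; simpl; auto.
           intros a [b0|b0] Da Db _; simpl in *; try contradiction; eauto.
        -- eapply (ev_emb (rs_lt q1) _ inl); try exact Dp; simpl; auto.
           intros a [b0|b0] Da Db _; simpl in *; try contradiction; eauto.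
      * destruct (classic (exists b0, rs_lt q2 b0 y)) as [[b0 Hb0]|Nb].
        -- assert (Ly : is_limit (rs_lt q2) y).
           { split. eauto. intros [a [Ha1 Ha2]]. apply Hnp. exists (inr a). split; auto.
             intros [c|c] [Hc1 Hc2]; simpl in *; auto. apply (Ha2 c); auto. }
           destruct (L2 y Ly) as [Cv Dp]. rewrite conv_ev in *. rewrite depth_ev in *. split.
           ++ eapply (ev_emb (rs_lt q2) _ inr); try exact Cv; simpl; auto.
              intros a [b1|b1] Da Db H; simpl in *; try contradiction; eauto.
              destruct H; try discriminate; contradiction.
           ++ eapply (ev_emb (rs_lt q2) _ inr); try exact Dp; simpl; auto.
              intros a [b1|b1] Da Db H; simpl in *; try contradiction; eauto.
              destruct H; try discriminate; contradiction.
        -- rewrite M2. 2:{ intros z0 Hz0. apply Nb. eauto. }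
           destruct z as [x|x]; simpl in Hz. 2:{ exfalso. apply Nb. eauto. }
           assert (Hnm : forall m, exists a, rs_lt q1 m a).
           { intro m. apply NNPP. intro N. apply Hnp. exists (inl m). split; simpl; auto.
             intros [c|c] [Hc1 Hc2]; simpl in *. apply N; eauto. apply Nb; eauto. }
           destruct C1 as [[NI _]|[[m [Hm Em]]|[_ [_ [_ [Cv Dp]]]]]].
           ++ exfalso. apply NI. constructor. exact x.
           ++ exfalso. destruct (Hnm m) as [a Ha]. destruct (Hm a) as [E|L]. { rewrite E in Ha. exact (wo_irrefl W1 _ Ha). }
              exact (wo_irrefl W1 _ (wo_trans W1 _ _ _ Ha L)).
           ++ rewrite E2. rewrite conv_ev in *. rewrite depth_ev in *. split.
              ** eapply (ev_emb (rs_lt q1) _ inl); try exact Cv; simpl; auto.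
                 intros a [b1|b1] Da Db H; simpl in *; try contradiction; eauto.
                 exfalso. apply Nb. eauto.
              ** eapply (ev_emb (rs_lt q1) _ inl); try exact Dp; simpl; auto.
                 intros a [b1|b1] Da Db H; simpl in *; try contradiction; eauto.
                 exfalso. apply Nb. eauto.
  - simpl. auto.
  - destruct C2 as [[NI2 E]|[[m [Hm Em]]|[[Hi] [Hnm [Hw [Cv Dp]]]]]].
    + rewrite E, E2.
      destruct C1 as [[NI1 E0]|[[m [Hm Em]]|[[Hi] [Hnm [Hw [Cv Dp]]]]]].
      * left. split. intros [[z|z]]; [apply NI1|apply NI2]; constructor; auto. simpl. rewrite E0. auto.
      * right. left. exists (inl m). split; auto. intros [a|a]; simpl.
        destruct (Hm a) as [E1'|L]; subst; auto. exfalso. apply NI2. constructor. auto.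
      * right. right. split. constructor. exact (inl Hi). split.
        intros [x|x]. destruct (Hnm x) as [z Hz]. exists (inl z). auto.
        exfalso. apply NI2. constructor; auto.
        split; auto. rewrite conv_ev in *. rewrite depth_ev in *. split.
        -- eapply (ev_emb (rs_lt q1) _ inl); try exact Cv; simpl; auto.
           intros a [b1|b1] Da Db H; simpl in *; try contradiction; eauto.
           exfalso. apply NI2. constructor; auto.
        -- eapply (ev_emb (rs_lt q1) _ inl); try exact Dp; simpl; auto.
           intros a [b1|b1] Da Db H; simpl in *; try contradiction; eauto.
           exfalso. apply NI2. constructor; auto.
    + right. left. exists (inr m). split; auto. intros [a|a]; simpl; auto. destruct (Hm a) as [E3|L3]; [subst; auto|auto].
    + right. right. split. constructor. exact (inr Hi). split.
      intros [x|x]. exists (inr Hi). simpl. auto. destruct (Hnm x) as [z Hz]. exists (inr z). auto.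
      split; auto. rewrite conv_ev in *. rewrite depth_ev in *. split.
      * eapply (ev_emb (rs_lt q2) _ inr); try exact Cv; simpl; auto.
        intros a [b1|b1] Da Db H; simpl in *; try contradiction; eauto.
        destruct H; try discriminate; contradiction.
      * eapply (ev_emb (rs_lt q2) _ inr); try exact Dp; simpl; auto.
        intros a [b1|b1] Da Db H; simpl in *; try contradiction; eauto.
        destruct H; try discriminate; contradiction.
Qed.


Lemma ev_sub {A : Type} (lt : A -> A -> Prop) (Q : A -> Prop) D (D' : {x | Q x} -> Prop) P :
  well_order lt ->
  ev lt D P -> (forall x, D' x -> D (proj1_sig x)) ->
  (forall a, D a -> exists x, D' x /\ le lt a (proj1_sig x)) ->
  ev (fun x y => lt (proj1_sig x) (proj1_sig y)) D' (fun k x => P k (proj1_sig x)).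
Proof.
  intros W H H1 H2 k. destruct (H k) as [a [Da Hc]]. destruct (H2 a Da) as [x [Dx Hx]].
  exists x. split; auto. intros c Dc Hc'. apply Hc; auto.
  eapply le_trans; eauto. destruct Hc' as [E|L]; [left; subst; auto|right; auto].
Qed.

Lemma sig_eq {A} (Q : A -> Prop) (x y : {a | Q a}) : proj1_sig x = proj1_sig y -> x = y.
Proof. destruct x, y; simpl. intro; subst. f_equal. apply proof_irrelevance. Qed.

Definition suffix {S} (q : rseq S) (m : rs_idx q) : rseq S :=
  {| rs_src := st_tgt (rs_step q m); rs_idx := {c | rs_lt q m c};
     rs_lt := fun x y => rs_lt q (proj1_sig x) (proj1_sig y);
     rs_step := fun x => rs_step q (proj1_sig x) |}.

Lemma red_suffix {S} (T : TRS S) q u m : is_rseq T q -> conv_target q u -> wf u ->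
  red T (st_tgt (rs_step q m)) u.
Proof.
  intros [Wf [W [V [M [Su L]]]]] C Hu.
  assert (Wm : well_order (fun x y : {c | rs_lt q m c} => rs_lt q (proj1_sig x) (proj1_sig y))).
  { constructor.
    - intros a b c. apply (wo_trans W).
    - intros a. apply (wo_irrefl W).
    - intros a b. destruct (wo_total W (proj1_sig a) (proj1_sig b)) as [H|[H|H]]; auto.
      right; left. apply sig_eq; auto.
    - apply (wf_inverse_image _ _ (rs_lt q) (@proj1_sig _ _)). apply (wo_wf W). }
  exists (suffix q m). split; [|split]; simpl; auto.
  - split; [|split; [exact Wm|split; [intros x; apply V|split; [|split]]]]; simpl.
    + destruct (classic (exists c, rs_lt q m c)) as [[c Hc]|N].
      * destruct (succ_exists _ _ _ W Hc) as [c0 [Hs _]]. rewrite <- (Su _ _ Hs).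
        apply (V c0).
      * destruct C as [[NI _]|[[M0 [HM E]]|[_ [Hnm _]]]].
        -- exfalso. apply NI. constructor. exact m.
        -- destruct (HM m) as [E'|L']. subst. auto. exfalso. apply N. eauto.
        -- destruct (Hnm m). exfalso. apply N. eauto.
    + intros [x Hx] Hmin. simpl. apply Su. split; auto.
      intros c [H1 H2]. apply (Hmin (exist _ c H1)). simpl. auto.
    + intros [x Hx] [y Hy] [H1 H2]. simpl in *. apply Su. split; auto.
      intros c [Hc1 Hc2]. apply (H2 (exist _ c (wo_trans W _ _ _ Hx Hc1))). simpl. auto.
    + intros [y Hy] [[[x0 Hx0] Hb] Hnp]. simpl in *.
      assert (Ly : is_limit (rs_lt q) y).
      { split. eauto. intros [d [Hd1 Hd2]].
        destruct (wo_total W m d) as [H|[H|H]].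
        - apply Hnp. exists (exist _ d H). split; [exact Hd1|]. simpl.
          intros [c Hc] [Hc1 Hc2]. simpl in *. apply (Hd2 c); auto.
        - subst d. apply (Hd2 x0). auto.
        - apply (Hd2 m). auto. }
      destruct (L y Ly) as [Cv Dp]. rewrite conv_ev in *. rewrite depth_ev in *.
      assert (Cof : forall a, rs_lt q a y -> exists x : {c | rs_lt q m c},
                 rs_lt q (proj1_sig x) y /\ le (rs_lt q) a (proj1_sig x)).
      { intros a Ha. destruct (wo_total W m a) as [H|[H|H]].
        - exists (exist _ a H). simpl. split; auto. left; auto.
        - subst. exists (exist _ x0 Hx0). simpl. split; auto. right; auto.
        - exists (exist _ x0 Hx0). simpl. split; auto. right; eapply wo_trans; eauto. }
      split.
      * apply (ev_sub (rs_lt q) _ (fun c => rs_lt q c y) _ (fun k c => agree k (st_tgt (rs_step q c)) (st_src (rs_step q y))) W Cv); auto.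
      * apply (ev_sub (rs_lt q) _ (fun c => rs_lt q c y) _ (fun k c => k < st_depth (rs_step q c)) W Dp); auto.
  - destruct C as [[NI _]|[[M0 [HM E]]|[_ [Hnm [_ [Cv Dp]]]]]].
    + exfalso. apply NI. constructor. exact m.
    + destruct (HM m) as [E'|L'].
      * left. split. intros [[c Hc]]. destruct (HM c) as [E2|L2]. { rewrite E2, <- E' in Hc. exact (wo_irrefl W _ Hc). } { rewrite <- E' in L2. exact (wo_irrefl W _ (wo_trans W _ _ _ Hc L2)). }
        rewrite E, E'. reflexivity.
      * right. left. exists (exist _ M0 L'). split; simpl; auto.
        intros [a Ha]. destruct (HM a) as [E2|L2]; [left; apply sig_eq; auto|right; auto].
    + right. right. destruct (Hnm m) as [c0 Hc0].
      split. constructor. exact (exist _ c0 Hc0). split.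
      { intros [x Hx]. destruct (Hnm x) as [c Hc]. exists (exist _ c (wo_trans W _ _ _ Hx Hc)). auto. }
      split; auto. rewrite conv_ev in *. rewrite depth_ev in *.
      assert (Cof : forall a, True -> exists x : {c | rs_lt q m c}, True /\ le (rs_lt q) a (proj1_sig x)).
      { intros a _. destruct (wo_total W m a) as [H|[H|H]].
        - exists (exist _ a H). simpl. split; auto. left; auto.
        - subst. exists (exist _ c0 Hc0). simpl. split; auto. right; auto.
        - exists (exist _ c0 Hc0). simpl. split; auto. right; eapply wo_trans; eauto. }
      split.
      * apply (ev_sub (rs_lt q) _ (fun _ => True) _ (fun k c => agree k (st_tgt (rs_step q c)) u) W Cv); auto.
      * apply (ev_sub (rs_lt q) _ (fun _ => True) _ (fun k c => k < st_depth (rs_step q c)) W Dp); auto.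
Qed.


Lemma finite_max {A} (lt : A -> A -> Prop) (l : list A) (P : A -> Prop) :
  well_order lt -> (exists x, In x l /\ P x) ->
  exists y, P y /\ forall x, In x l -> P x -> le lt x y.
Proof.
  intro W. induction l as [|a l IH]; intros [x [Hx Px]]; simpl in Hx; try contradiction.
  destruct (classic (exists x, In x l /\ P x)) as [H|H].
  - destruct (IH H) as [y [Py Hy]].
    destruct (classic (P a)) as [Pa|Pa].
    + destruct (wo_total W a y) as [L|[E|L]].
      * exists y. split; auto. intros z [E|Hz] Pz; subst; auto. right; auto.
      * subst. exists y. split; auto. intros z [E|Hz] Pz; subst; auto. left; auto.
      * exists a. split; auto. intros z [E|Hz] Pz; subst. left; auto.
        right. eapply le_lt_trans; eauto.
    + exists y. split; auto. intros z [E|Hz] Pz; subst; auto. contradiction.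
  - destruct Hx as [E|Hx]. 2:{ exfalso. eauto. } subst.
    exists x. split; auto. intros z [E|Hz] Pz; subst. left; auto. exfalso. eauto.
Qed.

Lemma finite_no_limit {S} (q : rseq S) : well_order (rs_lt q) -> finite_rseq q ->
  forall c, ~ is_limit (rs_lt q) c.
Proof.
  intros W [l Hl] c [[a Ha] Hnp].
  destruct (finite_max (rs_lt q) l (fun d => rs_lt q d c) W) as [d [Hd Hm]]. eauto.
  apply Hnp. exists d. split; auto. intros e [H1 H2].
  apply (lt_not_le _ _ _ W H1). apply Hm; auto.
Qed.



Definition choose {A : Type} (d : A) (P : A -> Prop) : A :=
  match excluded_middle_informative (exists x, P x) with
  | left H => proj1_sig (constructive_indefinite_description P H)
  | right _ => d end.

Lemma choose_spec {A : Type} (d : A) (P : A -> Prop) : (exists x, P x) -> P (choose d P).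
Proof.
  intro H. unfold choose. destruct (excluded_middle_informative _) as [H'|H'].
  - apply (proj2_sig (constructive_indefinite_description P H')).
  - contradiction.
Qed.

Lemma choose_default {A : Type} (d : A) (P : A -> Prop) : ~ (exists x, P x) -> choose d P = d.
Proof. intro H. unfold choose. destruct (excluded_middle_informative _); tauto. Qed.

Definition pl {S} (l : term S) (x : var) : pos := choose [] (fun p => l p = Some (inr x)).

Lemma pl_spec {S} (l : term S) x p : l p = Some (inr x) -> l (pl l x) = Some (inr x).
Proof. intro H. unfold pl. apply (choose_spec [] (fun p => l p = Some (inr x))). eauto. Qed.

Definition linear {S} (l : term S) := forall p q x, l p = Some (inr x) -> l q = Some (inr x) -> p = q.

Lemma pl_unique {S} (l : term S) x p : linear l -> l p = Some (inr x) -> pl l x = p.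
Proof. intros Hl H. apply (Hl _ _ x); auto. eapply pl_spec; eauto. Qed.

Definition Inv {S} (l t : term S) := forall q f, l q = Some (inl f) -> t q = Some (inl f).

Lemma Inv_pos {S} (l t : term S) o x : wf l -> wf t -> Inv l t -> l o = Some (inr x) -> t o <> None.
Proof.
  intros Wl Wt I H. destruct o as [|i o'] using rev_ind.
  - apply (proj1 Wt).
  - assert (l (o' ++ [i]) <> None) by congruence. apply (proj2 Wl) in H0.
    destruct H0 as [f [Hf Ha]]. apply (proj2 Wt). exists f. split; auto.
Qed.

Definition sig_of {S} (l t : term S) : var -> term S := fun x => subterm t (pl l x).

Lemma sig_of_wf {S} (l t : term S) : wf l -> wf t -> Inv l t -> wf_subst (sig_of l t).
Proof.
  intros Wl Wt I x. unfold sig_of. apply wf_subterm; auto.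
  destruct (classic (exists p, l p = Some (inr x))) as [[p Hp]|N].
  - apply (Inv_pos l t (pl l x) x Wl Wt I). eapply pl_spec; eauto.
  - unfold pl. rewrite choose_default; auto. apply (proj1 Wt).
Qed.

Lemma subst_var {S} (l : term S) sigma o x : wf l -> l o = Some (inr x) -> subterm (subst l sigma) o = sigma x.
Proof.
  intros Wl H. apply functional_extensionality. intro w. unfold subterm.
  rewrite subst_gsub. rewrite (gsub_var l _ o w x Wl H). auto.
Qed.

Lemma inl_novar {S} (l : term S) q f : wf l -> l q = Some (inl f) -> novar l q.
Proof.
  intros Wl H o1 o2 E y Hy. subst. destruct o2.
  - rewrite app_nil_r in H. congruence.
  - destruct (wf_prefix_inl l o1 (n :: o2) Wl) as [g Hg]; [congruence|discriminate|congruence].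
Qed.

Lemma subst_Inv {S} (l : term S) sigma : wf l -> Inv l (subst l sigma).
Proof.
  intros Wl q f H. rewrite subst_gsub. rewrite gsub_novar; auto. eapply inl_novar; eauto.
Qed.

Lemma Inv_subst {S} (l t : term S) : wf l -> linear l -> wf t -> Inv l t -> t = subst l (sig_of l t).
Proof.
  intros Wl Ll Wt I. apply functional_extensionality. intro p. rewrite subst_gsub.
  destruct (decomp l p) as [[o [w [x [E Hx]]]]|Hn].
  - subst. rewrite (gsub_var l _ o w x Wl Hx). unfold sig_of, subterm.
    rewrite (pl_unique l x o Ll Hx). auto.
  - rewrite gsub_novar; auto. induction p as [|i p IH] using rev_ind.
    + destruct (l []) as [[f|y]|] eqn:E.
      * apply I; auto.
      * exfalso. apply (Hn [] []) with y; auto.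
      * exfalso. apply (proj1 Wl); auto.
    + pose proof (novar_prefix l p [i] Hn) as Hn'. specialize (IH Hn').
      destruct (l (p ++ [i])) as [[f|y]|] eqn:E.
      * apply I; auto.
      * exfalso. apply (Hn (p ++ [i]) []) with y; auto. rewrite app_nil_r; auto.
      * destruct (t (p ++ [i])) eqn:E'; auto. exfalso.
        assert (t (p ++ [i]) <> None) by congruence. apply (proj2 Wt) in H.
        destruct H as [f [Hf Ha]].
        destruct (l p) as [[g|y]|] eqn:E2.
        -- rewrite Hf in IH. injection IH; intro; subst g.
           assert (exists f, l p = Some (inl f) /\ i < arity S f) by (exists f; split; congruence).
           apply (proj2 Wl) in H. congruence.
        -- apply (Hn p [i]) with y; auto.
        -- congruence.
Qed.

Lemma step_Inv {S} (T : TRS S) (l : term S) b : wf l -> Inv l (st_src b) ->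
  (forall f, l (st_pos b) <> Some (inl f)) -> Inv l (st_tgt b).
Proof.
  intros Wl I Hp q f H. unfold st_tgt.
  destruct (strip_cases (st_pos b) q) as [[e [E _]]|[_ Hn]].
  - exfalso. subst q. destruct e.
    + rewrite app_nil_r in H. apply (Hp f); auto.
    + destruct (wf_prefix_inl l (st_pos b) (n :: e) Wl) as [g Hg]; [congruence|discriminate|].
      apply (Hp g); auto.
  - rewrite replace_off; auto.
Qed.


Lemma overlap {S} (T : TRS S) rho b f : non_overlapping T -> rules T rho ->
  wf (lhs rho) -> linear (lhs rho) -> valid_step T b -> Inv (lhs rho) (st_src b) ->
  lhs rho (st_pos b) = Some (inl f) -> ~ (st_pos b = [] /\ rho = st_rule b) -> False.
Proof.
  intros Ho Hr Wl Ll [Wb [Rb [Sb Eb]]] I Hf Hn. apply Ho.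
  exists rho, (st_rule b), (sig_of (lhs rho) (st_src b)), (st_sub b), (st_pos b).
  refine (conj Hr (conj Rb (conj (sig_of_wf _ _ Wl Wb I) (conj Sb (conj (ex_intro _ f Hf) (conj _ Hn)))))).
  rewrite <- Inv_subst; auto.
Qed.

Definition G {S} (l r t : term S) : term S := gsub r (fun _ x => subterm t (pl l x)).

Lemma subst_G {S} (l r : term S) sigma : wf l -> wf r -> linear l ->
  (forall p x, r p = Some (inr x) -> exists q, l q = Some (inr x)) ->
  subst r sigma = G l r (subst l sigma).
Proof.
  intros Wl Wr Ll Hv. unfold G. rewrite subst_gsub. apply gsub_ext; auto.
  intros o x Hx. destruct (Hv o x Hx) as [q Hq]. rewrite subst_var with (x := x); auto.
  eapply pl_spec; eauto.
Qed.

Definition var_under {S} (l : term S) (p : pos) := exists x w, l (pl l x) = Some (inr x) /\ p = pl l x ++ w.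



Fixpoint enc (p : pos) : nat := match p with [] => 0 | i :: p' => S (Cantor.to_nat (i, enc p')) end.

Lemma enc_inj p p' : enc p = enc p' -> p = p'.
Proof.
  revert p'. induction p as [|i p IH]; intros [|j p'] H; cbn [enc] in H; try discriminate; auto.
  injection H as H'. assert (HP := Cantor.to_nat_inj (i, enc p) (j, enc p') H'). injection HP; intros. f_equal; auto.
Qed.

Lemma to_nat_mono x y x' y' : x <= x' -> y <= y' -> Cantor.to_nat (x, y) <= Cantor.to_nat (x', y').
Proof.
  intros H1 H2. pose proof (Cantor.to_nat_spec x y). pose proof (Cantor.to_nat_spec x' y').
  assert (y + x <= y' + x') by lia.
  assert ((y + x) * S (y + x) <= (y' + x') * S (y' + x')) by (apply Nat.mul_le_mono; lia).
  lia.
Qed.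

Fixpoint EB (A n : nat) : nat := match n with 0 => 0 | S n => S (Cantor.to_nat (A, EB A n)) end.

Lemma EB_mono A n n' : n <= n' -> EB A n <= EB A n'.
Proof.
  intro H. induction H; auto. cbn [EB]. pose proof (Cantor.to_nat_non_decreasing A (EB A m)). lia.
Qed.

Lemma enc_bound A p : Forall (fun i => i <= A) p -> enc p <= EB A (length p).
Proof.
  induction p as [|i p IH]; intro H; cbn [enc length EB]; auto. inversion H; subst.
  specialize (IH H3). apply le_n_S. apply to_nat_mono; auto.
Qed.

Lemma arity_bound S : exists A, forall f, arity S f <= A.
Proof.
  destruct (sym_finite S) as [l Hl]. exists (fold_right max 0 (map (arity S) l)).
  intro f. specialize (Hl f). induction l; simpl in *; try contradiction.
  destruct Hl as [E|H]; subst; lia || (specialize (IHl H); lia).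
Qed.

Lemma pos_entries {S} (t : term S) A p : wf t -> (forall f, arity S f <= A) -> t p <> None -> Forall (fun i => i <= A) p.
Proof.
  intros Wt HA. induction p as [|i p IH] using rev_ind; intro H; auto.
  pose proof H as H'. apply (proj2 Wt) in H'. destruct H' as [f [Hf Hi]].
  apply Forall_app. split. apply IH. congruence. constructor; auto. specialize (HA f). lia.
Qed.

Lemma bounded_max (P : nat -> Prop) N : (exists n, P n /\ n <= N) ->
  exists n, P n /\ forall n', P n' -> n' <= N -> n' <= n.
Proof.
  induction N; intros [n [Pn Hn]].
  - exists n. split; auto. intros. lia.
  - destruct (classic (P (S N))) as [H|H].
    + exists (S N). split; auto.
    + destruct IHN as [k [Pk Hk]].
      * exists n. split; auto. destruct (Nat.eq_dec n (S N)); subst; auto. contradiction. lia.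
      * exists k. split; auto. intros n' Pn' Hn'. destruct (Nat.eq_dec n' (S N)); subst. contradiction.
        apply Hk; auto. lia.
Qed.

Record LCtx {S} (T : TRS S) (rho : rule S) (q : rseq S) (m : rs_idx q) : Prop := {
  c_rules : rules T rho; c_lin : linear (lhs rho); c_seq : is_rseq T q;
  c_inv : forall c, le (rs_lt q) c m -> Inv (lhs rho) (st_src (rs_step q c));
  c_vu : forall c, rs_lt q c m -> var_under (lhs rho) (st_pos (rs_step q c)) }.

Definition xw {S} (l : term S) (p : pos) : var * pos :=
  choose (0, []) (fun xw => l (pl l (fst xw)) = Some (inr (fst xw)) /\ p = pl l (fst xw) ++ snd xw).

Lemma xw_spec {S} (l : term S) p : var_under l p ->
  l (pl l (fst (xw l p))) = Some (inr (fst (xw l p))) /\ p = pl l (fst (xw l p)) ++ snd (xw l p).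
Proof.
  intros [x [w [H E]]]. unfold xw.
  apply (choose_spec (0, []) (fun xw => l (pl l (fst xw)) = Some (inr (fst xw)) /\ p = pl l (fst xw) ++ snd xw)).
  exists (x, w). auto.
Qed.

Definition srcq {S} (q : rseq S) c := st_src (rs_step q c).
Definition tgtq {S} (q : rseq S) c := st_tgt (rs_step q c).
Definition xv {S} (rho : rule S) (q : rseq S) c := fst (xw (lhs rho) (st_pos (rs_step q c))).
Definition wv {S} (rho : rule S) (q : rseq S) c := snd (xw (lhs rho) (st_pos (rs_step q c))).
Definition occ {S} (rho : rule S) (q : rseq S) c o := rhs rho o = Some (inr (xv rho q c)).

Definition Mix {S} (rho : rule S) (q : rseq S) c (P : pos -> bool) : term S :=
  gsub (rhs rho) (fun o x => if P o then subterm (tgtq q c) (pl (lhs rho) x) else subterm (srcq q c) (pl (lhs rho) x)).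


Lemma ctx_wfl {S} T (rho : rule S) q m : LCtx T rho q m -> wf (lhs rho).
Proof. intro C. apply (rules_ok T rho (c_rules _ _ _ _ C)). Qed.
Lemma ctx_wfr {S} T (rho : rule S) q m : LCtx T rho q m -> wf (rhs rho).
Proof. intro C. apply (rules_ok T rho (c_rules _ _ _ _ C)). Qed.
Lemma ctx_rv {S} T (rho : rule S) q m : LCtx T rho q m ->
  forall p x, rhs rho p = Some (inr x) -> lhs rho (pl (lhs rho) x) = Some (inr x).
Proof.
  intros C p x H. destruct (rules_ok T rho (c_rules _ _ _ _ C)) as [_ [_ [_ [_ Hv]]]].
  destruct (Hv p x H) as [q0 Hq]. eapply pl_spec; eauto.
Qed.
Lemma ctx_W {S} T (rho : rule S) q m : LCtx T rho q m -> well_order (rs_lt q).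
Proof. intro C. apply (c_seq _ _ _ _ C). Qed.

Lemma ctx_xw {S} T (rho : rule S) q m c : LCtx T rho q m -> rs_lt q c m ->
  lhs rho (pl (lhs rho) (xv rho q c)) = Some (inr (xv rho q c)) /\
  st_pos (rs_step q c) = pl (lhs rho) (xv rho q c) ++ wv rho q c.
Proof. intros C H. apply xw_spec. apply (c_vu _ _ _ _ C); auto. Qed.

Lemma ctx_succ {S} T (rho : rule S) q m c : LCtx T rho q m -> rs_lt q c m ->
  exists c', is_succ (rs_lt q) c c' /\ le (rs_lt q) c' m /\ tgtq q c = srcq q c'.
Proof.
  intros C H. destruct (succ_exists _ _ _ (ctx_W _ _ _ _ C) H) as [c' [Hs Hl]].
  exists c'. split; auto. split; auto. unfold tgtq, srcq. symmetry. apply (c_seq _ _ _ _ C). auto.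
Qed.

Lemma ctx_wf_src {S} T (rho : rule S) q m c : LCtx T rho q m -> wf (srcq q c).
Proof. intro C. apply (c_seq _ _ _ _ C). Qed.

Lemma ctx_wf_tgt {S} T (rho : rule S) q m c : LCtx T rho q m -> rs_lt q c m -> wf (tgtq q c) /\ Inv (lhs rho) (tgtq q c).
Proof.
  intros C H. destruct (ctx_succ _ _ _ _ _ C H) as [c' [_ [Hl E]]]. rewrite E. split.
  apply (ctx_wf_src _ _ _ _ _ C). apply (c_inv _ _ _ _ C); auto.
Qed.

Lemma var_pos_eq {S} (l : term S) x y e1 e2 : wf l -> l (pl l x) = Some (inr x) -> l (pl l y) = Some (inr y) ->
  pl l x ++ e1 = pl l y ++ e2 -> x = y.
Proof.
  intros Wl Hx Hy E. destruct (prefix_comparable _ _ _ _ E) as [[e He]|[e He]].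
  - destruct e. rewrite app_nil_r in He. rewrite He in Hy. congruence.
    rewrite He in Hy. rewrite (wf_var_leaf l _ _ x Wl Hx) in Hy. discriminate. discriminate.
  - destruct e. rewrite app_nil_r in He. rewrite He in Hx. congruence.
    rewrite He in Hx. rewrite (wf_var_leaf l _ _ y Wl Hy) in Hx. discriminate. discriminate.
Qed.

Lemma disj {S} T (rho : rule S) q m c y : LCtx T rho q m -> rs_lt q c m ->
  lhs rho (pl (lhs rho) y) = Some (inr y) -> y <> xv rho q c ->
  subterm (tgtq q c) (pl (lhs rho) y) = subterm (srcq q c) (pl (lhs rho) y).
Proof.
  intros C H Hy Hne. destruct (ctx_xw _ _ _ _ _ C H) as [Hx E].
  unfold tgtq, srcq, st_tgt. apply subterm_replace_out.
  - intros e E'. rewrite E in E'. apply Hne. symmetry. eapply (var_pos_eq (lhs rho)); eauto.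
    apply (ctx_wfl _ _ _ _ C).
  - intros e E'. rewrite E in E'. apply Hne. rewrite <- app_assoc in E'.
    eapply (var_pos_eq (lhs rho) y _ []); eauto. apply (ctx_wfl _ _ _ _ C). rewrite app_nil_r. eauto.
Qed.

Lemma Mix_ext {S} T (rho : rule S) q m c P P' : LCtx T rho q m -> rs_lt q c m ->
  (forall o, occ rho q c o -> P o = P' o) -> Mix rho q c P = Mix rho q c P'.
Proof.
  intros C H HP. unfold Mix. apply gsub_ext. apply (ctx_wfr _ _ _ _ C).
  intros o x Hx. destruct (Nat.eq_dec x (xv rho q c)) as [E|N].
  - subst. rewrite HP; auto.
  - rewrite (disj _ _ _ _ _ x C H); auto. destruct (P o), (P' o); auto. eapply ctx_rv; eauto.
Qed.


Lemma var_incomp {S} (t : term S) o o' e e' x y : wf t -> t o = Some (inr x) -> t o' = Some (inr y) ->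
  o ++ e = o' ++ e' -> o = o'.
Proof.
  intros Wt Hx Hy E. destruct (prefix_comparable _ _ _ _ E) as [[f He]|[f He]].
  - destruct f. rewrite app_nil_r in He. auto.
    rewrite He in Hy. rewrite (wf_var_leaf t _ _ x Wt Hx) in Hy. discriminate. discriminate.
  - destruct f. rewrite app_nil_r in He. auto.
    rewrite He in Hx. rewrite (wf_var_leaf t _ _ y Wt Hy) in Hx. discriminate. discriminate.
Qed.

Lemma subterm_gsub {S} (r : term S) F o x : wf r -> r o = Some (inr x) -> subterm (gsub r F) o = F o x.
Proof. intros Wr H. apply functional_extensionality. intro w. unfold subterm. apply gsub_var; auto. Qed.

Lemma replace_at2 {S} (t X : term S) a w w' : replace t (a ++ w) X (a ++ w') = replace (subterm t a) w X w'.
Proof. rewrite <- subterm_replace_in. reflexivity. Qed.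

Lemma tgt_mix {S} T (rho : rule S) q m c o : LCtx T rho q m -> rs_lt q c m -> occ rho q c o ->
  replace (Mix rho q c (fun o' => enc o' <? enc o)) (o ++ wv rho q c)
    (subst (rhs (st_rule (rs_step q c))) (st_sub (rs_step q c)))
  = Mix rho q c (fun o' => enc o' <=? enc o).
Proof.
  intros C H Ho. pose proof (ctx_wfr _ _ _ _ C) as Wr.
  destruct (ctx_xw _ _ _ _ _ C H) as [Hx Ep].
  set (X := subst (rhs (st_rule (rs_step q c))) (st_sub (rs_step q c))).
  apply functional_extensionality. intro p. unfold Mix at 2.
  destruct (decomp (rhs rho) p) as [[o' [w' [y [E Hy]]]]|Hn].
  - subst p. rewrite (gsub_var _ _ o' w' y Wr Hy).
    destruct (list_eq_dec Nat.eq_dec o' o) as [Eo|Ne].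
    + subst o'. rewrite Nat.leb_refl. unfold occ in Ho. rewrite Ho in Hy. injection Hy; intro; subst y.
      rewrite replace_at2. unfold Mix. rewrite (subterm_gsub _ _ o (xv rho q c) Wr Ho).
      rewrite Nat.ltb_irrefl. unfold tgtq, st_tgt. rewrite Ep. rewrite subterm_replace_in.
      reflexivity.
    + rewrite replace_off.
      * unfold Mix. rewrite (gsub_var _ _ o' w' y Wr Hy).
        assert (enc o' <> enc o) by (intro E'; apply Ne; apply enc_inj; auto).
        destruct (enc o' <? enc o) eqn:E1; destruct (enc o' <=? enc o) eqn:E2; auto.
        -- apply Nat.ltb_lt in E1. apply Nat.leb_nle in E2. lia.
        -- apply Nat.ltb_nlt in E1. apply Nat.leb_le in E2. lia.
      * intros e E. apply Ne. rewrite <- app_assoc in E.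
        apply (var_incomp _ o' o w' _ y (xv rho q c) Wr Hy Ho E).
  - rewrite replace_off.
    + unfold Mix. rewrite !gsub_novar; auto.
    + intros e E. apply (Hn o (wv rho q c ++ e) ltac:(rewrite E, app_assoc; reflexivity) (xv rho q c) Ho).
Qed.

Definition Rel {S} (rho : rule S) K (t1 t2 : term S) :=
  forall y, (exists o, rhs rho o = Some (inr y)) ->
  agree K (subterm t1 (pl (lhs rho) y)) (subterm t2 (pl (lhs rho) y)).

Lemma Rel_refl {S} (rho : rule S) K t : Rel rho K t t.
Proof. intros y _ p _. auto. Qed.
Lemma Rel_sym {S} (rho : rule S) K t1 t2 : Rel rho K t1 t2 -> Rel rho K t2 t1.
Proof. intros H y Hy. apply agree_sym. auto. Qed.
Lemma Rel_trans {S} (rho : rule S) K t1 t2 t3 : Rel rho K t1 t2 -> Rel rho K t2 t3 -> Rel rho K t1 t3.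
Proof. intros H1 H2 y Hy. eapply agree_trans; eauto. Qed.
Lemma Rel_all {S} (rho : rule S) t1 t2 : wf (rhs rho) -> (forall K, Rel rho K t1 t2) -> G (lhs rho) (rhs rho) t1 = G (lhs rho) (rhs rho) t2.
Proof.
  intros Wr H. unfold G. apply gsub_ext; auto. intros o x Hx. apply agree_all. intro K. apply H. eauto.
Qed.

Definition HL {S} (rho : rule S) (q : rseq S) K c := (~ exists o, occ rho q c o) \/ K < length (wv rho q c).

Lemma harmless {S} T (rho : rule S) q m c K : LCtx T rho q m -> rs_lt q c m -> HL rho q K c ->
  Rel rho K (srcq q c) (tgtq q c).
Proof.
  intros C H Hh y [o Hy]. destruct (Nat.eq_dec y (xv rho q c)) as [E|N].
  - subst y. destruct Hh as [Hh|Hh]. { exfalso. apply Hh. exists o. apply Hy. }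
    destruct (ctx_xw _ _ _ _ _ C H) as [Hx Ep].
    unfold tgtq, st_tgt. rewrite Ep. rewrite subterm_replace_in.
    intros p Hp. rewrite replace_off; auto. intros e E. subst p. rewrite length_app in Hp. lia.
  - rewrite (disj _ _ _ _ _ y C H); auto. apply Rel_refl; eauto. eapply ctx_rv; eauto.
Qed.

Lemma l_bound {S} T (rho : rule S) q m : LCtx T rho q m ->
  exists nl, forall p, lhs rho p <> None -> length p <= nl.
Proof.
  intro C. destruct (rules_ok T rho (c_rules _ _ _ _ C)) as [_ [_ [[n Hn] _]]].
  exists n. intros p H. destruct (le_lt_dec (length p) n); auto. exfalso. apply H. apply Hn. auto.
Qed.

Lemma eqv {S} T (rho : rule S) q m K c1 c2 : LCtx T rho q m -> le (rs_lt q) c1 c2 -> le (rs_lt q) c2 m ->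
  (forall d, le (rs_lt q) c1 d -> rs_lt q d c2 -> HL rho q K d) ->
  Rel rho K (srcq q c1) (srcq q c2).
Proof.
  intros C. pose proof (ctx_W _ _ _ _ C) as W. destruct (l_bound _ _ _ _ C) as [nl Hnl].
  pose proof (c_seq _ _ _ _ C) as [_ [_ [_ [_ [Su Li]]]]].
  revert c2. intro c2. induction c2 as [c2 IH] using (well_founded_induction (wo_wf W)).
  intros H12 H2m Hh. destruct H12 as [E|L12]. { subst. apply Rel_refl. }
  assert (Hc2m : forall d, rs_lt q d c2 -> rs_lt q d m) by (intros; eapply lt_le_trans; eauto).
  destruct (wo_cases (rs_lt q) c2) as [Hm|[[d Hd]|Hl]].
  - exfalso. apply (Hm c1 L12).
  - assert (Hld : le (rs_lt q) c1 d) by (eapply succ_unique_pred; eauto).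
    unfold srcq at 2. rewrite (Su _ _ Hd). fold (tgtq q d).
    apply Rel_trans with (srcq q d).
    + apply IH; auto. apply Hd. right. apply Hc2m. apply Hd.
      intros d' H1 H2. apply Hh; auto. eapply wo_trans; eauto. apply Hd.
    + apply (harmless T rho q m); auto. apply Hc2m; apply Hd. apply Hh; auto. apply Hd.
  - destruct (Li c2 Hl) as [Cv _]. destruct (Cv (nl + K)) as [a [Ha Hc]].
    assert (Ex : exists e, rs_lt q e c2 /\ le (rs_lt q) a e /\ le (rs_lt q) c1 e).
    { destruct (wo_total W a c1) as [L|[E|L]].
      - exists c1. split; auto. split. right; auto. left; auto.
      - subst. exists c1. split; auto. split; left; auto.
      - exists a. split; auto. split. left; auto. right; auto. }
    destruct Ex as [e [He1 [He2 He3]]].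
    apply Rel_trans with (srcq q e).
    + apply IH; auto. right. apply Hc2m; auto. intros d' H1 H2. apply Hh; auto. eapply wo_trans; eauto.
    + apply Rel_trans with (tgtq q e).
      * apply (harmless T rho q m); auto.
      * intros y [o Hy]. apply agree_subterm.
        assert (length (pl (lhs rho) y) <= nl).
        { apply Hnl. rewrite (ctx_rv _ _ _ _ C o y Hy). discriminate. }
        apply agree_mono with (nl + K). lia. apply Hc; auto.
Qed.

Lemma mix_agree {S} T (rho : rule S) q m c P K t : LCtx T rho q m ->
  Rel rho K (srcq q c) t -> Rel rho K (tgtq q c) t ->
  agree K (Mix rho q c P) (G (lhs rho) (rhs rho) t).
Proof.
  intros C H1 H2. unfold Mix, G. apply gsub_agree. apply (ctx_wfr _ _ _ _ C).
  intros o x Hx Ho. apply agree_mono with K. lia. destruct (P o); [apply H2|apply H1]; eauto.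
Qed.

Lemma hfmax {S} T (rho : rule S) q m c' K : LCtx T rho q m -> le (rs_lt q) c' m ->
  (forall c, ~ (rs_lt q c c' /\ ~ HL rho q K c)) \/
  (exists e, (rs_lt q e c' /\ ~ HL rho q K e) /\ forall c, (rs_lt q c c' /\ ~ HL rho q K c) -> le (rs_lt q) c e).
Proof.
  intros C Hc'. pose proof (ctx_W _ _ _ _ C) as W. destruct (l_bound _ _ _ _ C) as [nl Hnl].
  pose proof (c_seq _ _ _ _ C) as [_ [_ [_ [_ [Su Li]]]]].
  set (Hf := fun c => rs_lt q c c' /\ ~ HL rho q K c).
  destruct (classic (exists c, Hf c)) as [[h0 Hh0]|N]. 2:{ left. intros c Hc. apply N. eauto. }
  right. apply NNPP. intro NM.
  assert (NoMax : forall e, Hf e -> exists h, Hf h /\ rs_lt q e h).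
  { intros e He. apply NNPP. intro N. apply NM. exists e. split; auto. intros c Hc.
    apply (not_lt_le _ _ _ W). intro L. apply N. eauto. }
  set (UB := fun d => le (rs_lt q) d c' /\ forall h, Hf h -> rs_lt q h d).
  destruct (wo_min (rs_lt q) UB W) as [d [[Hd1 Hd2] Hdm]].
  { exists c'. split. left; auto. intros h Hh. apply Hh. }
  destruct (wo_cases (rs_lt q) d) as [Hm|[[p Hp]|Hl]].
  - apply (Hm h0). apply Hd2; auto.
  - destruct (classic (Hf p)) as [Fp|Fp].
    + destruct (NoMax p Fp) as [h [Fh Lh]]. apply (lt_not_le _ _ _ W Lh).
      eapply succ_unique_pred; eauto.
    + apply (Hdm p). apply Hp. split.
      * right. eapply lt_le_trans; eauto. apply Hp.
      * intros h Fh. destruct (succ_unique_pred _ _ _ _ W Hp (Hd2 h Fh)) as [E|L]; auto.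
        subst. contradiction.
  - destruct (Li d Hl) as [_ Dp]. destruct (Dp (K + nl)) as [a [Ha Hc]].
    assert (NUB : ~ UB a). { intro U. apply (Hdm a Ha U). }
    assert (Ex : exists h, Hf h /\ le (rs_lt q) a h).
    { apply NNPP. intro N. apply NUB. split. right. eapply lt_le_trans; eauto.
      intros h Fh. apply NNPP. intro N2. apply N. exists h. split; auto. apply (not_lt_le _ _ _ W N2). }
    destruct Ex as [h [Fh Lah]]. specialize (Hc h (Hd2 h Fh) Lah). apply (proj2 Fh). right.
    assert (Hhm : rs_lt q h m) by (apply (lt_le_trans _ h c' m W); [apply Fh|auto]).
    destruct (ctx_xw _ _ _ _ _ C Hhm) as [Hx Ep]. unfold st_depth in Hc. rewrite Ep in Hc.
    rewrite length_app in Hc. assert (length (pl (lhs rho) (xv rho q h)) <= nl).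
    { apply Hnl. rewrite Hx. discriminate. }
    lia.
Qed.


Definition Jidx {S} (rho : rule S) (q : rseq S) (m : rs_idx q) : Type :=
  {j : rs_idx q * pos | rs_lt q (fst j) m /\ occ rho q (fst j) (snd j)}.
Definition jc {S} {rho : rule S} {q : rseq S} {m} (j : Jidx rho q m) := fst (proj1_sig j).
Definition jo {S} {rho : rule S} {q : rseq S} {m} (j : Jidx rho q m) := snd (proj1_sig j).
Definition ltJ {S} (rho : rule S) (q : rseq S) m (j j' : Jidx rho q m) :=
  rs_lt q (jc j) (jc j') \/ (jc j = jc j' /\ enc (jo j) < enc (jo j')).
Definition stepJ {S} (rho : rule S) (q : rseq S) m (j : Jidx rho q m) : step S :=
  {| st_src := Mix rho q (jc j) (fun o' => enc o' <? enc (jo j));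
     st_pos := jo j ++ wv rho q (jc j);
     st_rule := st_rule (rs_step q (jc j));
     st_sub := st_sub (rs_step q (jc j)) |}.

Lemma jc_lt {S} (rho : rule S) q m (j : Jidx rho q m) : rs_lt q (jc j) m.
Proof. apply (proj2_sig j). Qed.
Lemma jo_occ {S} (rho : rule S) q m (j : Jidx rho q m) : occ rho q (jc j) (jo j).
Proof. apply (proj2_sig j). Qed.
Definition mkJ {S} (rho : rule S) q m c o (H1 : rs_lt q c m) (H2 : occ rho q c o) : Jidx rho q m :=
  exist _ (c, o) (conj H1 H2).

Lemma J_eq {S} (rho : rule S) q m (j j' : Jidx rho q m) : jc j = jc j' -> jo j = jo j' -> j = j'.
Proof.
  destruct j as [[c o] H], j' as [[c' o'] H']. unfold jc, jo. simpl. intros E1 E2. subst.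
  f_equal. apply proof_irrelevance.
Qed.

Lemma J_wo {S} T (rho : rule S) q m : LCtx T rho q m -> well_order (ltJ rho q m).
Proof.
  intro C. pose proof (ctx_W _ _ _ _ C) as W. unfold ltJ. constructor.
  - intros a b c [H1|[E1 H1]] [H2|[E2 H2]].
    + left. eapply wo_trans; eauto.
    + left. rewrite <- E2. auto.
    + left. rewrite E1. auto.
    + right. split. congruence. lia.
  - intros a [H|[_ H]]. eapply wo_irrefl; eauto. lia.
  - intros a b. destruct (wo_total W (jc a) (jc b)) as [H|[H|H]]; auto.
    destruct (lt_eq_lt_dec (enc (jo a)) (enc (jo b))) as [[H'|H']|H']; auto.
    right; left. apply J_eq; auto. apply enc_inj; auto.
  - assert (H : forall c n (j : Jidx rho q m), jc j = c -> enc (jo j) = n -> Acc (ltJ rho q m) j).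
    { intro c. induction c as [c IHc] using (well_founded_induction (wo_wf W)).
      intro n. induction n as [n IHn] using (well_founded_induction lt_wf).
      intros j E1 E2. constructor. intros j' [H|[E H]].
      - apply (IHc (jc j') ltac:(rewrite <- E1; exact H) (enc (jo j'))); auto.
      - apply (IHn (enc (jo j')) ltac:(lia)); auto. congruence. }
    intro j. apply (H (jc j) (enc (jo j))); auto.
Qed.

Lemma src_pos_ex {S} T (rho : rule S) q m c x : LCtx T rho q m -> le (rs_lt q) c m ->
  lhs rho (pl (lhs rho) x) = Some (inr x) -> wf (subterm (srcq q c) (pl (lhs rho) x)).
Proof.
  intros C H Hx. apply wf_subterm. apply (ctx_wf_src _ _ _ _ _ C).
  apply (Inv_pos (lhs rho) _ _ x); auto. apply (ctx_wfl _ _ _ _ C). apply (ctx_wf_src _ _ _ _ _ C).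
  apply (c_inv _ _ _ _ C); auto.
Qed.

Lemma tgt_pos_ex {S} T (rho : rule S) q m c x : LCtx T rho q m -> rs_lt q c m ->
  lhs rho (pl (lhs rho) x) = Some (inr x) -> wf (subterm (tgtq q c) (pl (lhs rho) x)).
Proof.
  intros C H Hx. destruct (ctx_wf_tgt _ _ _ _ _ C H) as [W1 I1]. apply wf_subterm; auto.
  apply (Inv_pos (lhs rho) _ _ x); auto. apply (ctx_wfl _ _ _ _ C).
Qed.

Lemma Mix_wf {S} T (rho : rule S) q m c P : LCtx T rho q m -> rs_lt q c m -> wf (Mix rho q c P).
Proof.
  intros C H. apply gsub_wf. apply (ctx_wfr _ _ _ _ C). intros o x Hx.
  pose proof (ctx_rv _ _ _ _ C o x Hx). destruct (P o).
  apply (tgt_pos_ex T rho q m); auto. apply (src_pos_ex T rho q m); auto. right; auto.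
Qed.

Lemma G_wf {S} T (rho : rule S) q m c : LCtx T rho q m -> le (rs_lt q) c m -> wf (G (lhs rho) (rhs rho) (srcq q c)).
Proof.
  intros C H. apply gsub_wf. apply (ctx_wfr _ _ _ _ C). intros o x Hx.
  apply (src_pos_ex T rho q m); auto. eapply ctx_rv; eauto.
Qed.

Lemma J_valid {S} T (rho : rule S) q m (j : Jidx rho q m) : LCtx T rho q m -> valid_step T (stepJ rho q m j).
Proof.
  intro C. pose proof (jc_lt _ _ _ j) as Hc. pose proof (jo_occ _ _ _ j) as Ho.
  destruct (c_seq _ _ _ _ C) as [_ [_ [V _]]]. destruct (V (jc j)) as [_ [R [Sb E]]].
  split; [|split; [|split]]; simpl; auto.
  - apply (Mix_wf T rho q m); auto.
  - rewrite <- subterm_app. unfold Mix. rewrite (subterm_gsub _ _ _ _ (ctx_wfr _ _ _ _ C) Ho).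
    rewrite Nat.ltb_irrefl. rewrite subterm_app. unfold srcq.
    destruct (ctx_xw _ _ _ _ _ C Hc) as [_ Ep]. rewrite <- Ep. auto.
Qed.

Lemma J_tgt {S} T (rho : rule S) q m (j : Jidx rho q m) : LCtx T rho q m ->
  st_tgt (stepJ rho q m j) = Mix rho q (jc j) (fun o' => enc o' <=? enc (jo j)).
Proof. intro C. unfold st_tgt. simpl. apply (tgt_mix T rho q m); auto. apply jc_lt. apply jo_occ. Qed.

Lemma Mix_false {S} (rho : rule S) q c : Mix rho q c (fun _ => false) = G (lhs rho) (rhs rho) (srcq q c).
Proof. reflexivity. Qed.
Lemma Mix_true {S} (rho : rule S) q c : Mix rho q c (fun _ => true) = G (lhs rho) (rhs rho) (tgtq q c).
Proof. reflexivity. Qed.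

Lemma G_agree {S} (rho : rule S) K t1 t2 : wf (rhs rho) -> Rel rho K t1 t2 ->
  agree K (G (lhs rho) (rhs rho) t1) (G (lhs rho) (rhs rho) t2).
Proof.
  intros Wr H. unfold G. apply gsub_agree; auto. intros o x Hx Ho. apply agree_mono with K. lia.
  apply H. eauto.
Qed.

Lemma succ_le {S} (q : rseq S) c c1 c' : well_order (rs_lt q) -> is_succ (rs_lt q) c c1 -> rs_lt q c c' -> le (rs_lt q) c1 c'.
Proof.
  intros W [H1 H2] H. apply (not_lt_le _ _ _ W). intro L. apply (H2 c'). auto.
Qed.

Lemma between0 {S} T (rho : rule S) q m c1 c' : LCtx T rho q m -> le (rs_lt q) c1 c' -> le (rs_lt q) c' m ->
  (forall d, le (rs_lt q) c1 d -> rs_lt q d c' -> ~ exists o, occ rho q d o) ->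
  G (lhs rho) (rhs rho) (srcq q c1) = G (lhs rho) (rhs rho) (srcq q c').
Proof.
  intros C H1 H2 H. apply Rel_all. apply (ctx_wfr _ _ _ _ C). intro K.
  apply (eqv T rho q m); auto. intros d Hd1 Hd2. left. apply H; auto.
Qed.

Lemma between {S} T (rho : rule S) q m c c' : LCtx T rho q m -> rs_lt q c c' -> le (rs_lt q) c' m ->
  (forall d, rs_lt q c d -> rs_lt q d c' -> ~ exists o, occ rho q d o) ->
  G (lhs rho) (rhs rho) (tgtq q c) = G (lhs rho) (rhs rho) (srcq q c').
Proof.
  intros C H1 H2 H. pose proof (ctx_W _ _ _ _ C) as W.
  assert (Hcm : rs_lt q c m) by (eapply lt_le_trans; eauto).
  destruct (ctx_succ _ _ _ _ _ C Hcm) as [c1 [Hs [Hl E]]]. rewrite E.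
  apply (between0 T rho q m); auto. eapply succ_le; eauto.
  intros d Hd1 Hd2. apply H; auto. apply (lt_le_trans _ c c1 d W); [apply Hs|auto].
Qed.

Lemma ev_ext {A : Type} (lt : A -> A -> Prop) D D' P : (forall x, D x <-> D' x) -> ev lt D P -> ev lt D' P.
Proof.
  intros H E k. destruct (E k) as [a [Da Ha]]. exists a. split. apply H; auto.
  intros c Dc Hc. apply Ha; auto. apply H; auto.
Qed.


Lemma J_good {S} T (rho : rule S) q m c' K (j : Jidx rho q m) : LCtx T rho q m -> le (rs_lt q) c' m ->
  rs_lt q (jc j) c' -> (forall d, le (rs_lt q) (jc j) d -> rs_lt q d c' -> HL rho q K d) ->
  agree K (st_tgt (stepJ rho q m j)) (G (lhs rho) (rhs rho) (srcq q c')) /\ K < st_depth (stepJ rho q m j).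
Proof.
  intros C Hc' Hj Hh. pose proof (ctx_W _ _ _ _ C) as W. split.
  - rewrite (J_tgt T rho q m j C). apply (mix_agree T rho q m); auto.
    + apply (eqv T rho q m); auto. right; auto.
    + destruct (ctx_succ _ _ _ _ _ C (jc_lt _ _ _ j)) as [c1 [Hs [Hl E]]]. rewrite E.
      apply (eqv T rho q m); auto. eapply succ_le; eauto.
      intros d H1 H2. apply Hh; auto. right. apply (lt_le_trans _ _ c1 d W); auto. apply Hs.
  - unfold st_depth. simpl. rewrite length_app.
    destruct (Hh (jc j) (or_introl eq_refl) Hj) as [N|L].
    + exfalso. apply N. exists (jo j). apply jo_occ.
    + lia.
Qed.

Lemma enc_NK {S} (r : term S) K : wf r -> exists N, forall o, r o <> None -> length o <= K -> enc o <= N.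
Proof.
  intro Wr. destruct (arity_bound S) as [A HA]. exists (EB A K). intros o Ho Hl.
  eapply Nat.le_trans. apply enc_bound. apply (pos_entries r A o Wr HA Ho). apply EB_mono; auto.
Qed.

Lemma Jconv {S} T (rho : rule S) q m c' : LCtx T rho q m -> le (rs_lt q) c' m ->
  (exists j : Jidx rho q m, rs_lt q (jc j) c') ->
  (forall j : Jidx rho q m, rs_lt q (jc j) c' -> exists j', rs_lt q (jc j') c' /\ ltJ rho q m j j') ->
  forall K, exists a : Jidx rho q m, rs_lt q (jc a) c' /\ forall j, rs_lt q (jc j) c' -> le (ltJ rho q m) a j ->
    agree K (st_tgt (stepJ rho q m j)) (G (lhs rho) (rhs rho) (srcq q c')) /\ K < st_depth (stepJ rho q m j).
Proof.
  intros C Hc' [j0 Hj0] NoMax K. pose proof (ctx_W _ _ _ _ C) as W. pose proof (J_wo _ _ _ _ C) as WJ.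
  pose proof (ctx_wfr _ _ _ _ C) as Wr.
  destruct (hfmax T rho q m c' K C Hc') as [Hnone|[e [[He1 He2] Hemax]]].
  - exists j0. split; auto. intros j Hj Hle. apply (J_good T); auto. intros d _ Hd.
    apply NNPP; intro N. apply (Hnone d); auto.
  - assert (LeJ : forall j j' : Jidx rho q m, le (ltJ rho q m) j j' -> le (rs_lt q) (jc j) (jc j')).
    { intros j j' [E|[L|[E L]]]. subst. left; auto. right; auto. left; auto. }
    destruct (classic (exists j1 : Jidx rho q m, rs_lt q (jc j1) c' /\ rs_lt q e (jc j1))) as [[j1 [Hj1 He]]|Nj].
    + exists j1. split; auto. intros j Hj Hle. apply (J_good T); auto. intros d Hd1 Hd2.
      apply NNPP; intro N. specialize (Hemax d (conj Hd2 N)).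
      apply (lt_not_le _ _ _ W (lt_le_trans _ _ _ _ W He (le_trans _ _ _ _ W (LeJ _ _ Hle) Hd1))). auto.
    + assert (Hall : forall j : Jidx rho q m, rs_lt q (jc j) c' -> le (rs_lt q) (jc j) e).
      { intros j Hj. apply (not_lt_le _ _ _ W). intro L. apply Nj. eauto. }
      assert (Hem : rs_lt q e m) by (apply (lt_le_trans _ e c' m W); auto).
      assert (Hocc : exists o, occ rho q e o).
      { apply NNPP. intro N. apply He2. left. auto. }
      destruct (enc_NK (rhs rho) K Wr) as [N HN].
      assert (Hinf : exists o, occ rho q e o /\ N < enc o).
      { apply NNPP. intro NI. destruct Hocc as [o0 Ho0].
        destruct (bounded_max (fun n => exists o, occ rho q e o /\ enc o = n) N) as [n [[o1 [Ho1 En]] Hmax]].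
        { exists (enc o0). split. eauto. apply Nat.nlt_ge. intro L. apply NI. eauto. }
        destruct (NoMax (mkJ rho q m e o1 Hem Ho1) He1) as [j' [Hj' [L|[E L]]]].
        - apply (lt_not_le _ _ _ W L). apply Hall; auto.
        - simpl in E. unfold jo in L. simpl in L.
          pose proof (jo_occ _ _ _ j') as Oj. rewrite <- E in Oj. unfold jc in Oj. simpl in Oj.
          assert (enc (jo j') <= n). { apply Hmax. eauto. apply Nat.nlt_ge. intro L'. apply NI. eauto. }
          unfold jo in H. lia. }
      destruct Hinf as [oa [Hoa HNa]].
      exists (mkJ rho q m e oa Hem Hoa). split; [exact He1|].
      intros j Hj Hle.
      assert (Ejc : jc j = e).
      { destruct (LeJ _ _ Hle) as [E|L]. auto. exfalso. apply (lt_not_le _ _ _ W L). apply Hall; auto. }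
      assert (Hen : enc oa <= enc (jo j)).
      { destruct Hle as [E|[L|[E L]]].
        - subst. unfold jo. simpl. lia.
        - exfalso. change (rs_lt q e (jc j)) in L. rewrite Ejc in L. exact (wo_irrefl W _ L).
        - change (enc oa < enc (jo j)) in L. lia. }
      destruct (ctx_succ _ _ _ _ _ C Hem) as [e1 [Hs [Hl E1]]].
      split.
      * rewrite (J_tgt T rho q m j C). apply agree_trans with (G (lhs rho) (rhs rho) (tgtq q e)).
        -- rewrite Ejc. rewrite <- Mix_true. unfold Mix. apply gsub_agree; auto. intros o x Hx Ho.
           assert (enc o <= N) by (apply HN; auto; congruence).
           destruct (enc o <=? enc (jo j)) eqn:Eb. intros p _; auto.
           apply Nat.leb_nle in Eb. lia.
        -- rewrite E1. apply G_agree; auto. apply (eqv T rho q m); auto. eapply succ_le; eauto.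
           intros d H1 H2. apply NNPP; intro Nd. specialize (Hemax d (conj H2 Nd)).
           apply (lt_not_le _ _ _ W (lt_le_trans _ _ _ _ W (proj1 Hs) H1)). auto.
      * unfold st_depth. simpl. rewrite length_app.
        assert (K < length (jo j)).
        { apply Nat.nle_gt. intro L. assert (enc (jo j) <= N).
          { apply HN; auto. pose proof (jo_occ _ _ _ j) as Oj. unfold occ in Oj. congruence. }
          lia. }
        lia.
Qed.


Lemma lift' {S} (T : TRS S) (rho : rule S) (q : rseq S) (m c0 : rs_idx q) :
  rules T rho -> linear (lhs rho) -> is_rseq T q -> is_min (rs_lt q) c0 ->
  (forall c, le (rs_lt q) c m -> Inv (lhs rho) (st_src (rs_step q c))) ->
  (forall c, rs_lt q c m -> var_under (lhs rho) (st_pos (rs_step q c))) ->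
  red T (G (lhs rho) (rhs rho) (st_src (rs_step q c0))) (G (lhs rho) (rhs rho) (st_src (rs_step q m))).
Proof.
  intros Hr Hl R Hc0 HI Hv.
  assert (C : LCtx T rho q m) by (constructor; auto).
  pose proof (ctx_W _ _ _ _ C) as W. pose proof (J_wo _ _ _ _ C) as WJ.
  pose proof (ctx_wfr _ _ _ _ C) as Wr.
  assert (Le0 : forall c, le (rs_lt q) c0 c) by (intro c; apply (not_lt_le _ _ _ W); apply Hc0).
  assert (LeJ : forall j j' : Jidx rho q m, le (ltJ rho q m) j j' -> le (rs_lt q) (jc j) (jc j')).
  { intros j j' [E|[L|[E L]]]. subst. left; auto. right; auto. left; auto. }
  exists {| rs_src := G (lhs rho) (rhs rho) (srcq q c0); rs_idx := Jidx rho q m;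
            rs_lt := ltJ rho q m; rs_step := stepJ rho q m |}.
  split; [|split; [reflexivity|]].
  - split; [|split; [exact WJ|split; [intro j; apply (J_valid T); auto|split; [|split]]]]; simpl. all: try (idtac).
    + apply (G_wf T rho q m); auto.
    +
      intros j Hm. 
      assert (Mx : Mix rho q (jc j) (fun o' => enc o' <? enc (jo j)) = G (lhs rho) (rhs rho) (srcq q (jc j))).
      { rewrite <- Mix_false. apply (Mix_ext T rho q m); auto. apply jc_lt. intros o Ho.
        destruct (enc o <? enc (jo j)) eqn:E; auto. apply Nat.ltb_lt in E.
        exfalso. apply (Hm (mkJ rho q m (jc j) o (jc_lt _ _ _ j) Ho)). right. split; auto. }
      unfold stepJ. simpl. rewrite Mx. symmetry. apply (between0 T rho q m); auto.
      right. apply jc_lt. intros d _ Hd [o Ho].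
      apply (Hm (mkJ rho q m d o (wo_trans W _ _ _ Hd (jc_lt _ _ _ j)) Ho)). left. auto.
    +
      intros j j' Hs. rewrite (J_tgt T rho q m j C). unfold stepJ. simpl.
      destruct (proj1 Hs) as [L|[E L]].
      *
        rewrite (Mix_ext T rho q m (jc j') _ (fun _ => false) C (jc_lt _ _ _ j')).
        rewrite (Mix_ext T rho q m (jc j) _ (fun _ => true) C (jc_lt _ _ _ j)).
        rewrite Mix_false, Mix_true. symmetry. apply (between T rho q m); auto. right. apply jc_lt.
        -- intros d Hd1 Hd2 [o Ho]. apply (proj2 Hs (mkJ rho q m d o (wo_trans W _ _ _ Hd2 (jc_lt _ _ _ j')) Ho)).
           split; left; auto.
        -- intros o Ho. destruct (enc o <=? enc (jo j)) eqn:E; auto. apply Nat.leb_nle in E. exfalso.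
           apply (proj2 Hs (mkJ rho q m (jc j) o (jc_lt _ _ _ j) Ho)). split. right. split; [reflexivity|change (enc (jo j) < enc o); lia].
           left. auto.
        -- intros o Ho. destruct (enc o <? enc (jo j')) eqn:E; auto. apply Nat.ltb_lt in E. exfalso.
           apply (proj2 Hs (mkJ rho q m (jc j') o (jc_lt _ _ _ j') Ho)). split. left. auto.
           right. split; auto.
      * rewrite <- E. apply (Mix_ext T rho q m); auto. apply jc_lt. intros o Ho.
        destruct (enc o <=? enc (jo j)) eqn:E1.
        -- apply Nat.leb_le in E1. apply Nat.ltb_lt. lia.
        -- apply Nat.leb_nle in E1. apply Nat.ltb_nlt. intro L2.
           apply (proj2 Hs (mkJ rho q m (jc j) o (jc_lt _ _ _ j) Ho)). split.
           right. split; [reflexivity|change (enc (jo j) < enc o); lia]. right. split; [exact E|exact L2].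
    +
      intros j' [[j0 Hj0] Hnp].
      assert (NoBelow : forall o, occ rho q (jc j') o -> ~ enc o < enc (jo j')).
      { intros o Ho Lo.
        destruct (bounded_max (fun n => exists o, occ rho q (jc j') o /\ enc o = n /\ n < enc (jo j')) (enc (jo j')))
          as [n [[o1 [Ho1 [En Ln]]] Hmax]].
        { exists (enc o). split; eauto. lia. }
        apply Hnp. exists (mkJ rho q m (jc j') o1 (jc_lt _ _ _ j') Ho1). split.
        - right. split; auto. simpl. unfold jo at 1. simpl. lia.
        - intros k [[L1|[E1 L1]] [L2|[E2 L2]]].
          + apply (wo_irrefl W (jc j')). eapply wo_trans; eauto.
          + simpl in L1. rewrite E2 in L1. apply (wo_irrefl W _ L1).
          + simpl in E1. rewrite <- E1 in L2. apply (wo_irrefl W _ L2).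
          + simpl in E1. unfold jo in L1 at 1. simpl in L1.
            assert (enc (jo k) <= n). { apply Hmax. exists (jo k). split. rewrite <- E2. apply jo_occ. split; auto. lia. }
            lia. }
      assert (HD : forall j, ltJ rho q m j j' <-> rs_lt q (jc j) (jc j')).
      { intro j. split.
        - intros [L|[E L]]; auto. exfalso. apply (NoBelow (jo j)); auto. rewrite <- E. apply jo_occ.
        - intro L. left. auto. }
      assert (Src : Mix rho q (jc j') (fun o' => enc o' <? enc (jo j')) = G (lhs rho) (rhs rho) (srcq q (jc j'))).
      { rewrite <- Mix_false. apply (Mix_ext T rho q m); auto. apply jc_lt. intros o Ho.
        apply Nat.ltb_nlt. apply NoBelow; auto. }
      assert (N1 : exists j, rs_lt q (jc j) (jc j')) by (exists j0; apply HD; auto).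
      assert (N2 : forall j : Jidx rho q m, rs_lt q (jc j) (jc j') -> exists j'', rs_lt q (jc j'') (jc j') /\ ltJ rho q m j j'').
      { intros j Hj. apply NNPP. intro N. apply Hnp. exists j. split. apply HD; auto.
        intros k [H1 H2]. apply N. exists k. split; auto. apply HD; auto. }
      pose proof (Jconv T rho q m (jc j') C (or_intror (jc_lt _ _ _ j')) N1 N2) as JC.
      simpl. rewrite Src. split.
      * intro K. destruct (JC K) as [a [Ha Hall]]. exists a. split. apply HD; auto.
        intros c Dc Hac. apply Hall; auto. apply HD; auto.
      * intro K. destruct (JC K) as [a [Ha Hall]]. exists a. split. apply HD; auto.
        intros c Dc Hac. apply Hall; auto. apply HD; auto.
  -
    destruct (classic (inhabited (Jidx rho q m))) as [[j0]|NI].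
    + destruct (classic (exists jm : Jidx rho q m, forall j, le (ltJ rho q m) j jm)) as [[jm Hjm]|NM].
      * right. left. exists jm. split. intro a. destruct (Hjm a) as [E|L]; auto. simpl.
        rewrite (J_tgt T rho q m jm C).
        rewrite (Mix_ext T rho q m (jc jm) _ (fun _ => true) C (jc_lt _ _ _ jm)).
        -- rewrite Mix_true. symmetry. apply (between T rho q m); auto. apply jc_lt. left; auto.
           intros d Hd1 Hd2 [o Ho]. destruct (Hjm (mkJ rho q m d o Hd2 Ho)) as [E|L].
           ++ rewrite <- E in Hd1. apply (wo_irrefl W _ Hd1).
           ++ apply (lt_not_le _ _ _ W Hd1). apply (LeJ (mkJ rho q m d o Hd2 Ho) jm). right. auto.
        -- intros o Ho. apply Nat.leb_le. destruct (Hjm (mkJ rho q m (jc jm) o (jc_lt _ _ _ jm) Ho)) as [E|[L|[E L]]].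
           ++ rewrite <- E. unfold jo. simpl. lia.
           ++ exfalso. apply (wo_irrefl W _ L).
           ++ unfold jo in L at 1. simpl in L. lia.
      * assert (NoMax : forall j : Jidx rho q m, exists j', ltJ rho q m j j').
        { intro j. apply NNPP. intro N. apply NM. exists j. intro k. apply (not_lt_le _ _ _ WJ). intro L. apply N. eauto. }
        right. right. split. constructor. exact j0. split; auto. split.
        { apply (G_wf T rho q m); auto. left; auto. }
        assert (N1 : exists j : Jidx rho q m, rs_lt q (jc j) m) by (exists j0; apply jc_lt).
        assert (N2 : forall j : Jidx rho q m, rs_lt q (jc j) m -> exists j'', rs_lt q (jc j'') m /\ ltJ rho q m j j'').
        { intros j _. destruct (NoMax j) as [j' Hj']. exists j'. split; auto. apply jc_lt. }
        pose proof (Jconv T rho q m m C (or_introl eq_refl) N1 N2) as JC.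
        split.
        -- intro K. destruct (JC K) as [a [Ha Hall]]. exists a. split; auto.
           intros c _ Hac. apply Hall; auto. apply jc_lt.
        -- intro K. destruct (JC K) as [a [Ha Hall]]. exists a. split; auto.
           intros c _ Hac. apply Hall; auto. apply jc_lt.
    + left. split; auto. simpl. symmetry. apply (between0 T rho q m); auto. left; auto.
      intros d _ Hd [o Ho]. apply NI. constructor. exact (mkJ rho q m d o Hd Ho).
Qed.

Lemma one_step {S} (T : TRS S) t u a : orthogonal T -> wf u -> normal_form T u -> red T t u ->
  valid_step T a -> st_src a = t -> st_pos a = [] -> wf (st_tgt a) -> red T (st_tgt a) u.
Proof.
  intros [Hll Ho] Hu Hnf Rtu Va Ea Pa Wta.
  destruct Va as [Wt [Hr [Ws Eq]]]. rewrite Pa in Eq. simpl in Eq. change (st_src a = subst (lhs (st_rule a)) (st_sub a)) in Eq.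
  set (rho := st_rule a) in *. set (l := lhs rho) in *.
  destruct (rules_ok T rho Hr) as [Wl [Wr [Fl [[f0 Hf0] Hv]]]].
  assert (Ll : linear l). { intros p1 p2 x H1 H2. apply (Hll rho Hr p1 p2 x H1 H2). }
  assert (Es : st_tgt a = G l (rhs rho) t).
  { unfold st_tgt. rewrite Pa. rewrite replace_nil. rewrite <- Ea, Eq. apply subst_G; auto. }
  destruct Rtu as [q [R [Eq0 C]]].
  pose proof R as R'. destruct R' as [Wf [W [V [M [Su L]]]]].
  destruct Fl as [nl Hnl].
  assert (Lb : forall p, l p <> None -> length p <= nl).
  { intros p H. destruct (le_lt_dec (length p) nl); auto. exfalso. apply H. apply Hnl. auto. }
  assert (Pres : forall b, valid_step T b -> st_pos b <> [] -> Inv l (st_src b) -> Inv l (st_tgt b)).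
  { intros b Vb Pb Ib. apply step_Inv; auto. intros f Hf.
    apply (overlap T rho b f Ho Hr Wl Ll Vb Ib Hf). intros [E _]. contradiction. }
  assert (It : Inv l t). { rewrite <- Ea, Eq. apply subst_Inv; auto. }
  assert (InvAll : forall c, (forall d, rs_lt q d c -> st_pos (rs_step q d) <> []) -> Inv l (st_src (rs_step q c))).
  { intro c. induction c using (well_founded_induction (wo_wf W)). intro Hd.
    destruct (wo_cases (rs_lt q) c) as [Hm|[[d Hsd]|Hl]].
    - rewrite M; auto. rewrite Eq0. auto.
    - rewrite (Su _ _ Hsd). apply Pres; auto. apply Hd. apply Hsd.
      apply H. apply Hsd. intros e He. apply Hd. eapply wo_trans; eauto. apply Hsd.
    - destruct (L c Hl) as [Cv _]. destruct (Cv nl) as [e [He Hc]].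
      assert (Ie : Inv l (st_tgt (rs_step q e))).
      { apply Pres; auto. apply H; auto. intros d Hd'. apply Hd. eapply wo_trans; eauto. }
      intros p f Hp. rewrite <- (Hc e He (or_introl eq_refl) p). apply Ie; auto.
      apply Lb. congruence. }
  assert (NoNF : Inv l u -> False).
  { intros Iv. apply Hnf. exists [], rho, (sig_of l u). refine (conj Hr (conj (sig_of_wf _ _ Wl Hu Iv) _)).
    change (u = subst l (sig_of l u)). apply Inv_subst; auto. }
  destruct (classic (exists c, st_pos (rs_step q c) = [])) as [Ex|NEx].
  2:{ exfalso. assert (IA : forall c, Inv l (st_src (rs_step q c))).
      { intro c. apply InvAll. intros d _ E. apply NEx. eauto. }
      assert (IT : forall c, Inv l (st_tgt (rs_step q c))).
      { intro c. apply Pres; auto. intro E. apply NEx. eauto. }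
      destruct C as [[_ E]|[[mm [_ E]]|[_ [_ [_ [Cv _]]]]]].
      - apply NoNF. rewrite E, Eq0. auto.
      - apply NoNF. rewrite E. auto.
      - apply NoNF. destruct (Cv nl) as [e [_ He]].
        intros p f Hp. rewrite <- (He e I (or_introl eq_refl) p). apply IT; auto.
        apply Lb. congruence. }
  destruct (wo_min (rs_lt q) _ W Ex) as [m [Pm Hm]].
  assert (Im : forall c, le (rs_lt q) c m -> Inv l (st_src (rs_step q c))).
  { intros c Hc. apply InvAll. intros d Hd E. apply (Hm d); auto. eapply lt_le_trans; eauto. }
  destruct (V m) as [Wsm [Rm [Sm Em]]].
  assert (Rho : st_rule (rs_step q m) = rho).
  { apply NNPP. intro N. apply (overlap T rho (rs_step q m) f0 Ho Hr Wl Ll (V m) (Im m (or_introl eq_refl))).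
    rewrite Pm. auto. intros [_ E]. apply N. auto. }
  rewrite Pm in Em. simpl in Em. change (st_src (rs_step q m) = subst (lhs (st_rule (rs_step q m))) (st_sub (rs_step q m))) in Em.
  rewrite Rho in Em.
  assert (Etm : st_tgt (rs_step q m) = G l (rhs rho) (st_src (rs_step q m))).
  { unfold st_tgt. rewrite Pm, replace_nil, Rho. rewrite Em. apply subst_G; auto. }
  destruct (wo_min (rs_lt q) (fun _ => True) W) as [c0 [_ Hc0]]. eauto.
  assert (Src0 : st_src (rs_step q c0) = t).
  { rewrite M. auto. intros b Hb. apply (Hc0 b Hb I). }
  apply red_trans with (st_tgt (rs_step q m)).
  - rewrite Es, Etm, <- Src0. apply (lift' T rho q m c0); auto.
    + intros b Hb. apply (Hc0 b Hb I).
    + intros c Hc. change (var_under l (st_pos (rs_step q c))). destruct (V c) as [Wc [Rc [Sc Ec]]].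
      destruct (decomp l (st_pos (rs_step q c))) as [[o [w [x [E Hx]]]]|Hn].
      * exists x, w. rewrite (pl_unique l x o Ll Hx). auto.
      * exfalso. assert (Ic := Im c (or_intror Hc)).
        destruct (l (st_pos (rs_step q c))) as [[f|y]|] eqn:E.
        -- apply (overlap T rho (rs_step q c) f Ho Hr Wl Ll (V c) Ic E).
           intros [E' _]. apply (Hm c Hc E').
        -- apply (Hn _ [] (eq_sym (app_nil_r _)) y E).
        -- assert (subterm (st_src (rs_step q c)) (st_pos (rs_step q c)) [] <> None).
           { rewrite Ec. unfold subst. simpl. destruct (rules_ok T _ Rc) as [Wlc [_ [_ [[g Hg] _]]]].
             rewrite Hg. discriminate. }
           apply H. unfold subterm. rewrite app_nil_r.
           rewrite (Inv_subst l _ Wl Ll Wc Ic). rewrite subst_gsub. rewrite gsub_novar; auto.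
  - apply red_suffix; auto.
Qed.

Theorem mainTheorem13 (S : signature) (T : TRS S) (t s u : term S) :
  orthogonal T -> wf t -> wf s -> wf u ->
  (exists q : rseq S, is_rseq T q /\ rs_src q = t /\ conv_target q u) ->
  normal_form T u ->
  (exists q : rseq S, is_rseq T q /\ rs_src q = t /\ finite_rseq q /\
     (forall a, st_depth (rs_step q a) = 0) /\ conv_target q s) ->
  exists q : rseq S, is_rseq T q /\ rs_src q = s /\ conv_target q u.
Proof.
  intros Ho Ht Hs Hu Htu Hnf [q [R [Eq [Fin [D0 C]]]]].
  assert (Rt : red T t u) by exact Htu.
  destruct R as [Wf [W [V [M [Su L]]]]].
  assert (Pos : forall a, st_pos (rs_step q a) = []).
  { intro a. specialize (D0 a). unfold st_depth in D0. destruct (st_pos (rs_step q a)); auto. discriminate. }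
  assert (All : forall c, red T (st_src (rs_step q c)) u).
  { intro c. induction c using (well_founded_induction (wo_wf W)).
    destruct (wo_cases (rs_lt q) c) as [Hm|[[d Hd]|Hl]].
    - rewrite M; auto. rewrite Eq. auto.
    - rewrite (Su _ _ Hd). apply (one_step T (st_src (rs_step q d))); auto.
      apply H. apply Hd. rewrite <- (Su _ _ Hd). apply (V c).
    - exfalso. eapply finite_no_limit; eauto. }
  destruct C as [[NI E]|[[m [Hm E]]|[[Hi] [Hnm _]]]].
  - subst s. rewrite Eq. exact Htu.
  - subst s. apply (one_step T (st_src (rs_step q m))); auto.
  - exfalso. destruct Fin as [l Hl].
    destruct (finite_max (rs_lt q) l (fun _ => True) W) as [y [_ Hy]]. { exists Hi. auto. }
    destruct (Hnm y) as [z Hz]. apply (lt_not_le _ _ _ W Hz). apply Hy; auto.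
Qed.
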